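(* Let $\Gamma\in\mathbb{R}^{p\times p}$ be a continuous-time interconnection (not necessarily connected). There exists $\alpha>0$ such that for every Riemann-integrable $Q:\mathbb{R}_{\ge0}\to\mathcal Q_n$, the solution $\mathbf x(\cdot)$ of $\dot{\mathbf x}=(\Gamma\otimes Q_t)\mathbf x$, $\mathbf x\in\mathbb{R}^{np}$, satisfies $|\mathbf x(t)|\le\alpha|\mathbf x(0)|$ for all $t\ge0$.
   Context: $|\cdot|$ is the Euclidean norm; $\otimes$ is the Kronecker product; $\mathcal Q_n$ is the set of symmetric positive semidefinite $n\times n$ real matrices. A continuous-time interconnection is $\Gamma=[\gamma_{ij}]$ with $\gamma_{ij}\ge0$ for $i\ne j$ and $\gamma_{ii}=-\sum_{j\ne i}\gamma_{ij}$. Equivalently, writing $\mathbf x=[x_1^T\cdots x_p^T]^T$, the system is $\dot x_i=Q_t\sum_{j\ne i}\gamma_{ij}(x_j-x_i)$. *)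

(* Defs.v *)
From Stdlib Require Import Reals Lra.
From Coquelicot Require Import Coquelicot.
Open Scope R_scope.

Fixpoint fsum (n : nat) (f : nat -> R) : R :=
  match n with
  | O => 0
  | S m => fsum m f + f m
  end.

Definition interconnection (p : nat) (Gamma : nat -> nat -> R) : Prop :=
  (forall i j, (i < p)%nat -> (j < p)%nat -> i <> j -> 0 <= Gamma i j) /\
  (forall i, (i < p)%nat ->
     Gamma i i = - fsum p (fun j => if Nat.eq_dec j i then 0 else Gamma i j)).

Definition psd_sym (n : nat) (M : nat -> nat -> R) : Prop :=
  (forall k l, (k < n)%nat -> (l < n)%nat -> M k l = M l k) /\
  (forall v : nat -> R, 0 <= fsum n (fun k => fsum n (fun l => v k * M k l * v l))).

(* A stacked vector x in R^{np}: block i (i < p), component k (k < n) is x i k.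
   Euclidean norm. *)
Definition vnorm (n p : nat) (x : nat -> nat -> R) : R :=
  sqrt (fsum p (fun i => fsum n (fun k => x i k ^ 2))).

Definition kron_apply (n p : nat) (Gamma : nat -> nat -> R) (M : nat -> nat -> R)
  (x : nat -> nat -> R) : nat -> nat -> R :=
  fun i k => fsum p (fun j => Gamma i j * fsum n (fun l => M k l * x j l)).

(* x is a solution on [0, +oo) of x' = (Gamma (x) Q_t) x, in the integral
   (Caratheodory) sense appropriate for a Riemann-integrable coefficient:
   the right-hand side is Riemann integrable on every [0,t] and
   x(t) = x(0) + int_0^t (Gamma (x) Q_s) x(s) ds. *)
Definition is_solution (n p : nat) (Gamma : nat -> nat -> R)
  (Q : R -> nat -> nat -> R) (x : R -> nat -> nat -> R) : Prop :=
  forall t, 0 <= t -> forall i k, (i < p)%nat -> (k < n)%nat ->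
    ex_RInt (fun s => kron_apply n p Gamma (Q s) (x s) i k) 0 t /\
    x t i k = x 0 i k + RInt (fun s => kron_apply n p Gamma (Q s) (x s) i k) 0 t.

(* Main.v *)
Require Import Defs.
From Stdlib Require Import Reals Lra Lia FunctionalExtensionality Classical Bool ZArith IndefiniteDescription.
From Coquelicot Require Import Coquelicot.
Open Scope R_scope.

Lemma fsum_ext n f g : (forall i, (i<n)%nat -> f i = g i) -> fsum n f = fsum n g.
Proof. induction n; simpl; intros H; auto. rewrite IHn; [rewrite H|]; auto. Qed.

Lemma fsum_plus n f g : fsum n (fun i => f i + g i) = fsum n f + fsum n g.
Proof. induction n; simpl; [lra|]. rewrite IHn; lra. Qed.

Lemma fsum_scal n c f : fsum n (fun i => c * f i) = c * fsum n f.
Proof. induction n; simpl; [lra|]. rewrite IHn; lra. Qed.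

Lemma fsum_scalr n c f : fsum n (fun i => f i * c) = fsum n f * c.
Proof. induction n; simpl; [lra|]. rewrite IHn; lra. Qed.

Lemma fsum_opp n f : fsum n (fun i => - f i) = - fsum n f.
Proof. induction n; simpl; [lra|]. rewrite IHn; lra. Qed.

Lemma fsum_minus n f g : fsum n (fun i => f i - g i) = fsum n f - fsum n g.
Proof. induction n; simpl; [lra|]. rewrite IHn; lra. Qed.

Lemma fsum_zero n : fsum n (fun _ => 0) = 0.
Proof. induction n; simpl; [lra|]. rewrite IHn; lra. Qed.

Lemma fsum_le n f g : (forall i, (i<n)%nat -> f i <= g i) -> fsum n f <= fsum n g.
Proof. induction n; simpl; intros H; [lra|]. specialize (IHn (fun i Hi => H i ltac:(lia))).
  specialize (H n ltac:(lia)). lra. Qed.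

Lemma fsum_nonneg n f : (forall i, (i<n)%nat -> 0 <= f i) -> 0 <= fsum n f.
Proof. intros H. rewrite <- (fsum_zero n). apply fsum_le; auto. Qed.

Lemma fsum_swap n m (f : nat -> nat -> R) :
  fsum n (fun i => fsum m (fun j => f i j)) = fsum m (fun j => fsum n (fun i => f i j)).
Proof. induction n; simpl. - rewrite fsum_zero; auto.
  - rewrite IHn, <- fsum_plus. auto. Qed.

Lemma fsum_abs n f : Rabs (fsum n f) <= fsum n (fun i => Rabs (f i)).
Proof. induction n; simpl. - rewrite Rabs_R0; lra.
  - eapply Rle_trans; [apply Rabs_triang|]. lra. Qed.

Lemma fsum_const n c : fsum n (fun _ => c) = INR n * c.
Proof. induction n; simpl fsum; [simpl; lra|]. rewrite IHn, S_INR; lra. Qed.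

Lemma fsum_single n f i0 : (i0 < n)%nat -> (forall i, (i<n)%nat -> i <> i0 -> f i = 0) ->
  fsum n f = f i0.
Proof. induction n; intros Hi H; [lia|]. simpl.
  destruct (Nat.eq_dec i0 n).
  - subst. rewrite (fsum_ext n f (fun _ => 0)), fsum_zero; [lra|].
    intros; apply H; lia.
  - rewrite IHn; [|lia|intros; apply H; lia]. rewrite (H n); [lra|lia|auto]. Qed.

Lemma fsum_ge_term n f i0 : (forall i, (i<n)%nat -> 0 <= f i) -> (i0 < n)%nat -> f i0 <= fsum n f.
Proof. induction n; intros H Hi; [lia|]. simpl.
  destruct (Nat.eq_dec i0 n).
  - subst. assert (0 <= fsum n f) by (apply fsum_nonneg; intros; apply H; lia). lra.
  - assert (f i0 <= fsum n f) by (apply IHn; [intros; apply H|]; lia).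
    specialize (H n ltac:(lia)). lra. Qed.

Lemma fsum_nonneg_zero n f : (forall i, (i<n)%nat -> 0 <= f i) -> fsum n f = 0 ->
  forall i, (i<n)%nat -> f i = 0.
Proof. intros H Hs i Hi. pose proof (fsum_ge_term n f i H Hi). pose proof (H i Hi). lra. Qed.

Lemma fsum_abs_le n f g : (forall i, (i<n)%nat -> Rabs (f i) <= g i) -> Rabs (fsum n f) <= fsum n g.
Proof. intros H. eapply Rle_trans; [apply fsum_abs|]. apply fsum_le; auto. Qed.

Lemma finite_bound n (P : nat -> R -> Prop) :
  (forall i M M', M <= M' -> P i M -> P i M') ->
  (forall i, (i<n)%nat -> exists M, P i M) ->
  exists M, 0 <= M /\ forall i, (i<n)%nat -> P i M.
Proof. intros Hmono. induction n; intros H.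
  - exists 0. split; [lra|]. intros; lia.
  - destruct IHn as [M [HM0 HM]]. { intros i Hi. apply H; lia. }
    destruct (H n ltac:(lia)) as [M1 HM1].
    exists (Rmax M M1). split. { eapply Rle_trans; [apply HM0|apply Rmax_l]. }
    intros i Hi. destruct (Nat.eq_dec i n).
    + subst. eapply Hmono; [apply Rmax_r|auto].
    + eapply Hmono; [apply Rmax_l|]. apply HM; lia.
Qed.

Definition ssum (p : nat) (X : nat -> bool) (f : nat -> R) : R :=
  fsum p (fun i => if X i then f i else 0).

Definition sub (p : nat) (X : nat -> bool) := forall i, X i = true -> (i < p)%nat.

Lemma ssum_ext p X f g : (forall i, X i = true -> f i = g i) -> ssum p X f = ssum p X g.
Proof. intros H. unfold ssum. apply fsum_ext. intros i _. destruct (X i) eqn:E; auto. Qed.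

Lemma ssum_plus p X f g : ssum p X (fun i => f i + g i) = ssum p X f + ssum p X g.
Proof. unfold ssum. rewrite <- fsum_plus. apply fsum_ext. intros. destruct (X i); lra. Qed.

Lemma ssum_minus p X f g : ssum p X (fun i => f i - g i) = ssum p X f - ssum p X g.
Proof. unfold ssum. rewrite <- fsum_minus. apply fsum_ext. intros. destruct (X i); lra. Qed.

Lemma ssum_scal p X c f : ssum p X (fun i => c * f i) = c * ssum p X f.
Proof. unfold ssum. rewrite <- fsum_scal. apply fsum_ext. intros. destruct (X i); lra. Qed.

Lemma ssum_scalr p X c f : ssum p X (fun i => f i * c) = ssum p X f * c.
Proof. unfold ssum. rewrite <- fsum_scalr. apply fsum_ext. intros. destruct (X i); lra. Qed.

Lemma ssum_opp p X f : ssum p X (fun i => - f i) = - ssum p X f.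
Proof. unfold ssum. rewrite <- fsum_opp. apply fsum_ext. intros. destruct (X i); lra. Qed.

Lemma ssum_zero p X : ssum p X (fun _ => 0) = 0.
Proof. unfold ssum. rewrite (fsum_ext p _ (fun _ => 0)); [apply fsum_zero|]. intros. destruct (X i); lra. Qed.

Lemma ssum_le p X f g : (forall i, X i = true -> f i <= g i) -> ssum p X f <= ssum p X g.
Proof. intros H. unfold ssum. apply fsum_le. intros. destruct (X i) eqn:E; auto; lra. Qed.

Lemma ssum_nonneg p X f : (forall i, X i = true -> 0 <= f i) -> 0 <= ssum p X f.
Proof. intros H. rewrite <- (ssum_zero p X). apply ssum_le; auto. Qed.

Lemma ssum_swap p X Y (f : nat -> nat -> R) :
  ssum p X (fun i => ssum p Y (fun j => f i j)) = ssum p Y (fun j => ssum p X (fun i => f i j)).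
Proof. unfold ssum.
  transitivity (fsum p (fun i => fsum p (fun j => if X i then (if Y j then f i j else 0) else 0))).
  { apply fsum_ext. intros i _. destruct (X i); simpl; [reflexivity| rewrite fsum_zero; reflexivity]. }
  rewrite fsum_swap. apply fsum_ext. intros j _.
  destruct (Y j) eqn:E.
  - apply fsum_ext. intros. destruct (X i); auto.
  - rewrite (fsum_ext p _ (fun _ => 0)); [apply fsum_zero|]. intros. destruct (X i); auto. Qed.

Lemma ssum_abs p X f : Rabs (ssum p X f) <= ssum p X (fun i => Rabs (f i)).
Proof. unfold ssum. eapply Rle_trans; [apply fsum_abs|]. apply fsum_le. intros.
  destruct (X i); [lra|rewrite Rabs_R0; lra]. Qed.

Lemma ssum_ge_term p X f i0 : sub p X -> (forall i, X i = true -> 0 <= f i) -> X i0 = true ->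
  f i0 <= ssum p X f.
Proof. intros Hs H Hi. unfold ssum.
  replace (f i0) with (if X i0 then f i0 else 0) by (rewrite Hi; auto).
  apply (fsum_ge_term p (fun i => if X i then f i else 0) i0); [|apply Hs; auto]. intros. destruct (X i) eqn:E; [apply H; auto|lra]. Qed.

Lemma ssum_nonneg_zero p X f : sub p X -> (forall i, X i = true -> 0 <= f i) -> ssum p X f = 0 ->
  forall i, X i = true -> f i = 0.
Proof. intros Hs H Hz i Hi. pose proof (ssum_ge_term p X f i Hs H Hi). pose proof (H i Hi). lra. Qed.

Lemma ssum_single p X f i0 : sub p X -> X i0 = true ->
  (forall i, X i = true -> i <> i0 -> f i = 0) -> ssum p X f = f i0.
Proof. intros Hs Hi H. unfold ssum. rewrite (fsum_single p _ i0); [rewrite Hi; auto|apply Hs; auto|].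
  intros i _ Hne. destruct (X i) eqn:E; auto. Qed.

Lemma ssum_empty p X f : (forall i, X i = false) -> ssum p X f = 0.
Proof. intros H. unfold ssum. rewrite (fsum_ext p _ (fun _ => 0)); [apply fsum_zero|]. intros. rewrite H; auto. Qed.

Lemma ssum_split p X Y f :
  ssum p X f = ssum p (fun i => X i && Y i) f + ssum p (fun i => X i && negb (Y i)) f.
Proof. unfold ssum. rewrite <- fsum_plus. apply fsum_ext. intros.
  destruct (X i), (Y i); simpl; lra. Qed.

Lemma ssum_subset p X Y f : (forall i, X i = true -> Y i = true) ->
  ssum p X f = ssum p Y (fun i => if X i then f i else 0).
Proof. intros H. unfold ssum. apply fsum_ext. intros. destruct (X i) eqn:E.
  - rewrite (H i E); auto.
  - destruct (Y i); auto. Qed.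

Lemma ssum_delta p X f i0 : sub p X -> X i0 = true ->
  ssum p X (fun j => (if Nat.eqb i0 j then 1 else 0) * f j) = f i0.
Proof. intros Hs Hi. rewrite (ssum_single p X _ i0 Hs Hi).
  - rewrite Nat.eqb_refl; lra.
  - intros i _ Hne. destruct (Nat.eqb i0 i) eqn:E; [apply Nat.eqb_eq in E; lia|lra]. Qed.

Lemma ssum_abs_le p X f g : (forall i, X i = true -> Rabs (f i) <= g i) -> Rabs (ssum p X f) <= ssum p X g.
Proof. intros H. eapply Rle_trans; [apply ssum_abs|]. apply ssum_le; auto. Qed.

Fixpoint cardN (p : nat) (X : nat -> bool) : nat :=
  match p with O => O | S m => (cardN m X + (if X m then 1 else 0))%nat end.

Lemma cardN_lt p X Y : (forall i, X i = true -> Y i = true) ->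
  (exists i, (i<p)%nat /\ Y i = true /\ X i = false) -> (cardN p X < cardN p Y)%nat.
Proof. induction p; intros H [i [Hi [HY HX]]]; [lia|]. simpl.
  assert (Hle : forall q, (cardN q X <= cardN q Y)%nat).
  { induction q; simpl; [lia|]. destruct (X q) eqn:E; [rewrite (H q E)|destruct (Y q)]; lia. }
  destruct (Nat.eq_dec i p).
  - subst. rewrite HY, HX. specialize (Hle p). lia.
  - assert (cardN p X < cardN p Y)%nat by (apply IHp; auto; exists i; repeat split; auto; lia).
    destruct (X p) eqn:E; [rewrite (H p E)|destruct (Y p)]; lia. Qed.

Lemma cardN_false p : cardN p (fun _ => false) = 0%nat.
Proof. induction p; simpl; lia. Qed.

Lemma cardN_pos p X : (exists i, (i<p)%nat /\ X i = true) -> (0 < cardN p X)%nat.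
Proof. intros. rewrite <- (cardN_false p). apply (cardN_lt p (fun _ => false) X); [discriminate|].
  destruct H as [i [? ?]]. exists i; auto. Qed.

Definition cardR p X := ssum p X (fun _ => 1).

Lemma cardR_nonneg p X : 0 <= cardR p X.
Proof. apply ssum_nonneg; intros; lra. Qed.

Lemma cardR_pos p X i : sub p X -> X i = true -> 0 < cardR p X.
Proof. intros Hs Hi. pose proof (ssum_ge_term p X (fun _ => 1) i Hs ltac:(intros; lra) Hi).
  unfold cardR; lra. Qed.

Lemma ssum_const p X c : ssum p X (fun _ => c) = cardR p X * c.
Proof. unfold cardR. rewrite <- ssum_scalr. apply ssum_ext; intros; lra. Qed.

Lemma Rdiv_le_0_compat a b : 0 <= a -> 0 < b -> 0 <= a / b.
Proof. intros. unfold Rdiv. apply Rmult_le_pos; [lra|left; apply Rinv_0_lt_compat; lra]. Qed.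

Lemma Rdiv_nonpos a b : a <= 0 -> 0 < b -> a / b <= 0.
Proof. intros. unfold Rdiv. pose proof (Rinv_0_lt_compat b H0). nra. Qed.

Record IP := mkIP {
  ipf : (nat -> R) -> (nat -> R) -> R;
  ip_sym : forall a b, ipf a b = ipf b a;
  ip_add : forall a b c, ipf (fun k => a k + b k) c = ipf a c + ipf b c;
  ip_scal : forall r a c, ipf (fun k => r * a k) c = r * ipf a c;
  ip_pos : forall a, 0 <= ipf a a }.

Lemma ip_zero ip c : ipf ip (fun _ => 0) c = 0.
Proof. replace (fun _ : nat => 0) with (fun k : nat => 0 * c k) by (apply functional_extensionality; intros; lra).
  rewrite ip_scal; lra. Qed.

Lemma ip_zero_r ip c : ipf ip c (fun _ => 0) = 0.
Proof. rewrite ip_sym; apply ip_zero. Qed.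

Lemma ip_add_r ip a b c : ipf ip c (fun k => a k + b k) = ipf ip c a + ipf ip c b.
Proof. rewrite ip_sym, ip_add, (ip_sym ip a), (ip_sym ip b); auto. Qed.

Lemma ip_scal_r ip r a c : ipf ip c (fun k => r * a k) = r * ipf ip c a.
Proof. rewrite ip_sym, ip_scal, (ip_sym ip a); auto. Qed.

Lemma ip_opp ip a c : ipf ip (fun k => - a k) c = - ipf ip a c.
Proof. replace (fun k => - a k) with (fun k => (-1) * a k) by (apply functional_extensionality; intros; lra).
  rewrite ip_scal; lra. Qed.

Lemma ip_sub ip a b c : ipf ip (fun k => a k - b k) c = ipf ip a c - ipf ip b c.
Proof. replace (fun k => a k - b k) with (fun k => a k + (-1) * b k) by (apply functional_extensionality; intros; lra).
  rewrite ip_add, ip_scal; lra. Qed.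

Lemma ip_sub_r ip a b c : ipf ip c (fun k => a k - b k) = ipf ip c a - ipf ip c b.
Proof. rewrite ip_sym, ip_sub, (ip_sym ip a), (ip_sym ip b); auto. Qed.

Lemma ip_fsum ip m (g : nat -> nat -> R) b :
  ipf ip (fun k => fsum m (fun j => g j k)) b = fsum m (fun j => ipf ip (g j) b).
Proof. induction m; simpl. - apply ip_zero.
  - rewrite (ip_add ip (fun k => fsum m (fun j => g j k)) (g m)). rewrite IHm. auto. Qed.

Lemma ip_vlin ip p X (c : nat -> R) (y : nat -> nat -> R) b :
  ipf ip (fun k => ssum p X (fun j => c j * y j k)) b = ssum p X (fun j => c j * ipf ip (y j) b).
Proof. unfold ssum. rewrite (ip_fsum ip p (fun j k => if X j then c j * y j k else 0)).
  apply fsum_ext. intros j _. destruct (X j).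
  - apply (ip_scal ip (c j) (y j)).
  - apply ip_zero. Qed.

Lemma ip_vlin_r ip p X (c : nat -> R) (y : nat -> nat -> R) b :
  ipf ip b (fun k => ssum p X (fun j => c j * y j k)) = ssum p X (fun j => c j * ipf ip b (y j)).
Proof. rewrite ip_sym, ip_vlin. apply ssum_ext; intros; rewrite ip_sym; auto. Qed.

Lemma ip_expand ip a b : ipf ip (fun k => a k - b k) (fun k => a k - b k) =
  ipf ip a a - 2 * ipf ip a b + ipf ip b b.
Proof. rewrite ip_sub, !ip_sub_r, (ip_sym ip b a). lra. Qed.

Lemma ip_cs2 ip a b : 2 * ipf ip a b <= ipf ip a a + ipf ip b b.
Proof. pose proof (ip_pos ip (fun k => a k - b k)). rewrite ip_expand in H. lra. Qed.

Lemma ip_cs2' ip a b : - (2 * ipf ip a b) <= ipf ip a a + ipf ip b b.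
Proof. pose proof (ip_pos ip (fun k => a k + b k)). rewrite ip_add, !ip_add_r in H.
  rewrite (ip_sym ip b a) in H. lra. Qed.

Lemma ip_cs_abs ip a b : 2 * Rabs (ipf ip a b) <= ipf ip a a + ipf ip b b.
Proof. pose proof (ip_cs2 ip a b). pose proof (ip_cs2' ip a b). unfold Rabs; destruct Rcase_abs; lra. Qed.

Lemma ip_cs_t ip a b t : 0 < t -> 2 * Rabs (ipf ip a b) <= t * ipf ip a a + / t * ipf ip b b.
Proof. intros Ht. pose proof (ip_cs_abs ip (fun k => t * a k) b).
  rewrite ip_scal, ip_scal, ip_scal_r, Rabs_mult, (Rabs_right t) in H by lra.
  assert (2 * Rabs (ipf ip a b) <= t * ipf ip a a + / t * ipf ip b b); [|auto].
  apply (Rmult_le_reg_l t); [lra|].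
  replace (t * (t * ipf ip a a + / t * ipf ip b b)) with (t * t * ipf ip a a + ipf ip b b) by (field; lra).
  lra. Qed.

Lemma ip_sq_sum ip a b : ipf ip (fun k => a k + b k) (fun k => a k + b k) <= 2 * ipf ip a a + 2 * ipf ip b b.
Proof. rewrite ip_add, !ip_add_r. rewrite (ip_sym ip b a). pose proof (ip_cs2' ip a b).
  pose proof (ip_cs2 ip a b). lra. Qed.

Lemma ip_pair ip r s a b : 2 * (r * s * ipf ip a b) <= r * r * ipf ip a a + s * s * ipf ip b b.
Proof. pose proof (ip_cs2 ip (fun k => r * a k) (fun k => s * b k)).
  rewrite ip_scal, ip_scal_r, ip_scal, ip_scal_r, ip_scal, ip_scal_r in H. lra. Qed.

Lemma ip_wcs ip p X (al be : nat -> R) (y : nat -> nat -> R) :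
  (forall j, X j = true -> 0 <= al j) ->
  ipf ip (fun k => ssum p X (fun j => al j * be j * y j k)) (fun k => ssum p X (fun j => al j * be j * y j k))
  <= ssum p X al * ssum p X (fun j => al j * (be j * be j * ipf ip (y j) (y j))).
Proof. intros Hal.
  rewrite (ip_vlin ip p X (fun j => al j * be j) y).
  assert (Hl : ssum p X (fun j => al j * be j * ipf ip (y j) (fun k => ssum p X (fun j0 => al j0 * be j0 * y j0 k)))
     = ssum p X (fun j => ssum p X (fun j' => al j * al j' * (be j * be j' * ipf ip (y j) (y j'))))).
  { apply ssum_ext; intros j _. rewrite (ip_vlin_r ip p X (fun j => al j * be j) y).
    rewrite <- ssum_scal. apply ssum_ext; intros; ring. }
  rewrite Hl.
  rewrite <- ssum_scalr.
  assert (Hr : ssum p X (fun i => al i * ssum p X (fun j => al j * (be j * be j * ipf ip (y j) (y j))))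
     = ssum p X (fun j => ssum p X (fun j' => al j * al j' * (be j' * be j' * ipf ip (y j') (y j'))))).
  { apply ssum_ext; intros j _. rewrite <- ssum_scal. apply ssum_ext; intros; ring. }
  rewrite Hr.
  (* symmetrize *)
  apply (Rmult_le_reg_l 2); [lra|].
  assert (Hsym : ssum p X (fun j => ssum p X (fun j' => al j * al j' * (be j' * be j' * ipf ip (y j') (y j'))))
     = ssum p X (fun j => ssum p X (fun j' => al j * al j' * (be j * be j * ipf ip (y j) (y j))))).
  { rewrite ssum_swap. apply ssum_ext; intros; apply ssum_ext; intros; ring. }
  replace (2 * ssum p X (fun j => ssum p X (fun j' => al j * al j' * (be j' * be j' * ipf ip (y j') (y j')))))
    with (ssum p X (fun j => ssum p X (fun j' => al j * al j' * (be j * be j * ipf ip (y j) (y j) + be j' * be j' * ipf ip (y j') (y j')))))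
    by (transitivity (ssum p X (fun j => ssum p X (fun j' => al j * al j' * (be j * be j * ipf ip (y j) (y j))))
          + ssum p X (fun j => ssum p X (fun j' => al j * al j' * (be j' * be j' * ipf ip (y j') (y j')))));
        [rewrite <- ssum_plus; apply ssum_ext; intros; rewrite <- ssum_plus; apply ssum_ext; intros; ring
        | rewrite Hsym; ring]).
  rewrite <- ssum_scal. apply ssum_le; intros j Hj. rewrite <- ssum_scal. apply ssum_le; intros j' Hj'.
  replace (2 * (al j * al j' * (be j * be j' * ipf ip (y j) (y j'))))
     with (al j * al j' * (2 * (be j * be j' * ipf ip (y j) (y j')))) by ring.
  apply Rmult_le_compat_l; [apply Rmult_le_pos; auto|]. apply ip_pair.
Qed.

Definition nrm ip p X (y : nat -> nat -> R) := ssum p X (fun i => ipf ip (y i) (y i)).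
Definition Fq ip p X (P : nat -> nat -> R) (a b : nat -> nat -> R) :=
  ssum p X (fun i => ssum p X (fun j => P i j * ipf ip (a i) (b j))).
Definition Bv p X (B : nat -> nat -> R) (y : nat -> nat -> R) : nat -> nat -> R :=
  fun i k => ssum p X (fun j => B i j * y j k).
Definition Lyap p X B := exists P lam Lam eps, 0 < lam /\ 0 < Lam /\ 0 < eps /\
  (forall i j, P i j = P j i) /\
  forall ip y, lam * nrm ip p X y <= Fq ip p X P y y /\ Fq ip p X P y y <= Lam * nrm ip p X y /\
     Fq ip p X P y (Bv p X B y) <= - eps * nrm ip p X (Bv p X B y).
Definition subgen p X (B : nat -> nat -> R) :=
  (forall i j, X i = true -> X j = true -> i <> j -> 0 <= B i j) /\
  (forall i, X i = true -> ssum p X (B i) <= 0).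

Lemma nrm_nonneg ip p X y : 0 <= nrm ip p X y.
Proof. apply ssum_nonneg; intros; apply ip_pos. Qed.

Lemma Fq_diag ip p X w a b : sub p X ->
  Fq ip p X (fun i j => if Nat.eqb i j then w i else 0) a b = ssum p X (fun i => w i * ipf ip (a i) (b i)).
Proof. intros Hs. unfold Fq. apply ssum_ext; intros i Hi.
  rewrite (ssum_single p X _ i Hs Hi). { rewrite Nat.eqb_refl; auto. }
  intros j _ Hne. destruct (Nat.eqb i j) eqn:E; [apply Nat.eqb_eq in E; lia|lra]. Qed.

Lemma ip_self_zero ip (v : nat -> R) : ipf ip (fun k => v k - v k) (fun k => v k - v k) = 0.
Proof. replace (fun k => v k - v k) with (fun _ : nat => 0) by (apply functional_extensionality; intros; lra).
  apply ip_zero. Qed.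

Lemma ip_dsym ip (a b : nat -> R) : ipf ip (fun k => a k - b k) (fun k => a k - b k) =
  ipf ip (fun k => b k - a k) (fun k => b k - a k).
Proof. rewrite !ip_expand, (ip_sym ip a b). lra. Qed.

Lemma ssum_except p X f i : sub p X -> X i = true ->
  ssum p X (fun j => if Nat.eqb i j then 0 else f j) = ssum p X f - f i.
Proof. intros Hs Hi.
  assert (ssum p X f = ssum p X (fun j => if Nat.eqb i j then 0 else f j) + ssum p X (fun j => if Nat.eqb i j then f j else 0)).
  { rewrite <- ssum_plus. apply ssum_ext; intros. destruct (Nat.eqb i i0); lra. }
  rewrite (ssum_single p X (fun j => if Nat.eqb i j then f j else 0) i Hs Hi) in H.
  - rewrite Nat.eqb_refl in H. lra.
  - intros j _ Hne. destruct (Nat.eqb i j) eqn:E; [apply Nat.eqb_eq in E; lia|auto]. Qed.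

Lemma diag_diss ip p X B w y lam K : sub p X -> subgen p X B ->
  0 < lam -> (forall i, X i = true -> lam <= w i) -> 0 < K -> (forall i, X i = true -> - B i i <= K) ->
  (forall j, X j = true -> ssum p X (fun i => w i * B i j) <= 0) ->
  ssum p X (fun i => w i * ipf ip (y i) (Bv p X B y i)) <= - (lam / (4 * K)) * nrm ip p X (Bv p X B y).
Proof.
  intros Hs [Hoff Hrow] Hlam Hlw HK HKi Hc.
  set (g := fun i j => ipf ip (y i) (y j)).
  set (nd := fun i j => ipf ip (fun k => y i k - y j k) (fun k => y i k - y j k)).
  set (r := fun i => ssum p X (B i)).
  set (c := fun j => ssum p X (fun i => w i * B i j)).
  assert (E1 : forall i, ipf ip (y i) (Bv p X B y i) = ssum p X (fun j => B i j * g i j)).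
  { intros i. unfold Bv. rewrite (ip_vlin_r ip p X (B i) y). auto. }
  assert (Hnd : forall i j, nd i j = g i i - 2 * g i j + g j j).
  { intros. unfold nd, g. rewrite ip_expand. auto. }
  set (D := ssum p X (fun i => ssum p X (fun j => w i * B i j * nd i j)) + ssum p X (fun i => (- (w i * r i) - c i) * g i i)).
  assert (HF : 2 * ssum p X (fun i => w i * ipf ip (y i) (Bv p X B y i)) = - D).
  { unfold D.
    assert (A1 : ssum p X (fun i => ssum p X (fun j => w i * B i j * nd i j)) =
       ssum p X (fun i => w i * r i * g i i) - 2 * ssum p X (fun i => w i * ssum p X (fun j => B i j * g i j))
       + ssum p X (fun j => c j * g j j)).
    { assert (A2 : ssum p X (fun i => w i * r i * g i i) = ssum p X (fun i => ssum p X (fun j => w i * B i j * g i i))).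
      { apply ssum_ext; intros i _. unfold r. rewrite <- ssum_scal, <- ssum_scalr. apply ssum_ext; intros; ring. }
      assert (A3 : ssum p X (fun j => c j * g j j) = ssum p X (fun i => ssum p X (fun j => w i * B i j * g j j))).
      { rewrite ssum_swap. apply ssum_ext; intros j _. unfold c. rewrite <- ssum_scalr. apply ssum_ext; intros; ring. }
      assert (A4 : 2 * ssum p X (fun i => w i * ssum p X (fun j => B i j * g i j)) = ssum p X (fun i => ssum p X (fun j => 2 * (w i * B i j * g i j)))).
      { rewrite <- ssum_scal. apply ssum_ext; intros. rewrite <- !ssum_scal. apply ssum_ext; intros; ring. }
      rewrite A2, A3, A4, <- ssum_minus, <- ssum_plus. apply ssum_ext; intros i _.
      rewrite <- ssum_minus, <- ssum_plus. apply ssum_ext; intros j _. rewrite Hnd. ring. }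
    rewrite A1.
    assert (A5 : ssum p X (fun i => w i * ipf ip (y i) (Bv p X B y i)) = ssum p X (fun i => w i * ssum p X (fun j => B i j * g i j))).
    { apply ssum_ext; intros; rewrite E1; auto. }
    rewrite A5.
    assert (A6 : ssum p X (fun i => (- (w i * r i) - c i) * g i i) = - ssum p X (fun i => w i * r i * g i i) - ssum p X (fun j => c j * g j j)).
    { rewrite <- ssum_opp, <- ssum_minus. apply ssum_ext; intros; ring. }
    rewrite A6. ring. }
  set (al := fun i j => if Nat.eqb i j then 0 else B i j).
  assert (Hal : forall i j, X i = true -> X j = true -> 0 <= al i j).
  { intros i j Hi Hj. unfold al. destruct (Nat.eqb i j) eqn:E; [lra|]. apply Hoff; auto. apply Nat.eqb_neq; auto. }
  assert (Hsal : forall i, X i = true -> ssum p X (al i) = r i - B i i).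
  { intros i Hi. unfold al, r. rewrite ssum_except; auto. }
  assert (Hsal0 : forall i, X i = true -> 0 <= ssum p X (al i)).
  { intros i Hi. apply ssum_nonneg. intros; apply Hal; auto. }
  assert (Hri : forall i, X i = true -> r i <= 0) by (intros; apply Hrow; auto).
  assert (HBy : forall i, X i = true -> Bv p X B y i = (fun k => ssum p X (fun j => al i j * 1 * (y j k - y i k)) + r i * y i k)).
  { intros i Hi. apply functional_extensionality; intros k. unfold Bv.
    assert (ssum p X (fun j => al i j * 1 * (y j k - y i k)) = ssum p X (fun j => al i j * y j k) - ssum p X (al i) * y i k).
    { rewrite <- ssum_scalr, <- ssum_minus. apply ssum_ext; intros; ring. }
    rewrite H, Hsal by auto.
    assert (E2 : ssum p X (fun j => al i j * y j k) = ssum p X (fun j => B i j * y j k) - B i i * y i k).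
    { rewrite <- (ssum_except p X (fun j => B i j * y j k)) by auto.
      apply ssum_ext; intros. unfold al. destruct (Nat.eqb i i0); lra. }
    rewrite E2. ring. }
  assert (Hbi : forall i, X i = true -> lam * ipf ip (Bv p X B y i) (Bv p X B y i) <=
      2 * K * (ssum p X (fun j => w i * B i j * nd i j) + (- (w i * r i) - c i) * g i i)).
  { intros i Hi. rewrite (HBy i Hi).
    set (u := fun k => ssum p X (fun j => al i j * 1 * (y j k - y i k))).
    pose proof (ip_sq_sum ip u (fun k => r i * y i k)) as Hsq.
    rewrite ip_scal, ip_scal_r in Hsq.
    pose proof (ip_wcs ip p X (al i) (fun _ => 1) (fun j k => y j k - y i k) ltac:(intros; apply Hal; auto)) as Hw.
    fold u in Hw.
    assert (Hw2 : ssum p X (fun j => al i j * (1 * 1 * ipf ip (fun k => y j k - y i k) (fun k => y j k - y i k)))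
       = ssum p X (fun j => al i j * nd i j)).
    { apply ssum_ext; intros j _. unfold nd. rewrite ip_dsym. ring. }
    simpl in Hw. rewrite Hw2 in Hw.
    assert (Hsnd : 0 <= ssum p X (fun j => al i j * nd i j)).
    { apply ssum_nonneg; intros; apply Rmult_le_pos; [apply Hal; auto|apply ip_pos]. }
    assert (Hgi : 0 <= g i i) by apply ip_pos.
    assert (HKa : ssum p X (al i) <= K) by (rewrite Hsal; auto; pose proof (HKi i Hi); pose proof (Hri i Hi); lra).
    assert (HKr : - r i <= K) by (pose proof (HKi i Hi); pose proof (Hsal0 i Hi); rewrite Hsal in H0; auto; lra).
    assert (Hlw' : lam <= w i) by auto.
    assert (Hci : c i <= 0) by (apply Hc; auto).
    assert (T1 : lam * ssum p X (fun j => al i j * nd i j) <= ssum p X (fun j => w i * B i j * nd i j)).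
    { rewrite <- ssum_scal. apply ssum_le; intros j Hj. unfold al.
      destruct (Nat.eqb i j) eqn:E.
      - apply Nat.eqb_eq in E; subst. unfold nd. rewrite ip_self_zero. lra.
      - assert (0 <= B i j) by (apply Hoff; auto; apply Nat.eqb_neq; auto).
        assert (0 <= nd i j) by apply ip_pos. assert (0 <= B i j * nd i j) by (apply Rmult_le_pos; auto). nra. }
    assert (T2 : lam * (- r i) * g i i <= (- (w i * r i) - c i) * g i i).
    { apply Rmult_le_compat_r; auto. pose proof (Hri i Hi). nra. }
    assert (Hu : ipf ip u u <= K * ssum p X (fun j => al i j * nd i j)).
    { eapply Rle_trans; [apply Hw|]. apply Rmult_le_compat_r; auto. }
    assert (Hr2 : r i * (r i * g i i) <= K * (- r i) * g i i).
    { pose proof (Hri i Hi). replace (r i * (r i * g i i)) with ((- r i) * (- r i) * g i i) by ring.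
      apply Rmult_le_compat_r; auto. apply Rmult_le_compat_r; lra. }
    unfold g in *.
    assert (lam * ipf ip (fun k => u k + r i * y i k) (fun k => u k + r i * y i k) <=
       lam * (2 * (K * ssum p X (fun j => al i j * nd i j)) + 2 * (K * (- r i) * ipf ip (y i) (y i)))).
    { apply Rmult_le_compat_l; [lra|]. lra. }
    eapply Rle_trans; [apply H|]. nra. }
  assert (HD : lam * nrm ip p X (Bv p X B y) <= 2 * K * D).
  { unfold nrm, D. rewrite <- ssum_scal, <- ssum_plus, <- ssum_scal.
    apply ssum_le; intros i Hi. apply Hbi; auto. }
  apply (Rmult_le_reg_l 2); [lra|]. rewrite HF.
  assert (- (2 * (lam / (4 * K) * nrm ip p X (Bv p X B y))) = - (lam * nrm ip p X (Bv p X B y)) / (2 * K)) by (field; lra).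
  replace (2 * (- (lam / (4 * K)) * nrm ip p X (Bv p X B y))) with (- (lam * nrm ip p X (Bv p X B y)) / (2 * K)) by (field; lra).
  apply (Rmult_le_reg_l (2 * K)); [lra|].
  replace (2 * K * (- (lam * nrm ip p X (Bv p X B y)) / (2 * K))) with (- (lam * nrm ip p X (Bv p X B y))) by (field; lra).
  lra.
Qed.

Lemma lyap_diag p X B w : sub p X -> subgen p X B ->
  (forall i, X i = true -> 0 < w i) ->
  (forall j, X j = true -> ssum p X (fun i => w i * B i j) <= 0) -> Lyap p X B.
Proof.
  intros Hs [Hoff Hrow] Hw Hc.
  set (lam := / (1 + ssum p X (fun i => / w i))).
  assert (Hsinv : 0 <= ssum p X (fun i => / w i)).
  { apply ssum_nonneg; intros; left; apply Rinv_0_lt_compat; auto. }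
  assert (Hlam : 0 < lam) by (apply Rinv_0_lt_compat; lra).
  assert (Hlamw : forall i, X i = true -> lam <= w i).
  { intros i Hi. unfold lam. pose proof (Hw i Hi).
    pose proof (ssum_ge_term p X (fun i => / w i) i Hs ltac:(intros; left; apply Rinv_0_lt_compat; auto) Hi).
    simpl in H0.
    replace (w i) with (/ / w i) by (field; lra).
    apply Rinv_le_contravar; [apply Rinv_0_lt_compat; auto|lra]. }
  set (K := 1 + ssum p X (fun i => - B i i)).
  assert (HBii : forall i, X i = true -> 0 <= - B i i).
  { intros i Hi. pose proof (Hrow i Hi).
    rewrite (ssum_split p X (fun j => Nat.eqb j i)) in H.
    rewrite (ssum_single p _ _ i) in H.
    - assert (0 <= ssum p (fun j => X j && negb (Nat.eqb j i)) (B i)).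
      { apply ssum_nonneg. intros j Hj. apply andb_true_iff in Hj as [Hj1 Hj2].
        apply negb_true_iff, Nat.eqb_neq in Hj2. apply Hoff; auto. }
      lra.
    - intros j Hj. apply andb_true_iff in Hj as [Hj1 _]. apply Hs; auto.
    - rewrite Hi, Nat.eqb_refl; auto.
    - intros j Hj Hne. apply andb_true_iff in Hj as [_ Hj]. apply Nat.eqb_eq in Hj; lia. }
  assert (HK : 0 < K).
  { unfold K. pose proof (ssum_nonneg p X (fun i => - B i i) HBii). lra. }
  assert (HKi : forall i, X i = true -> - B i i <= K).
  { intros i Hi. unfold K. pose proof (ssum_ge_term p X (fun i => - B i i) i Hs HBii Hi). simpl in H; lra. }
  exists (fun i j => if Nat.eqb i j then w i else 0), lam, (1 + ssum p X w), (lam / (4 * K)).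
  assert (Hsw : 0 <= ssum p X w) by (apply ssum_nonneg; intros; left; auto).
  split; [auto|]. split; [lra|]. split; [apply Rdiv_lt_0_compat; lra|].
  split. { intros i j. destruct (Nat.eqb i j) eqn:E; rewrite Nat.eqb_sym, E; auto.
    apply Nat.eqb_eq in E; subst; auto. }
  intros ip y. rewrite !Fq_diag by auto.
  split; [|split].
  - unfold nrm. rewrite <- ssum_scal. apply ssum_le; intros i Hi.
    apply Rmult_le_compat_r; [apply ip_pos|auto].
  - unfold nrm. rewrite <- ssum_scal. apply ssum_le; intros i Hi.
    apply Rmult_le_compat_r; [apply ip_pos|].
    pose proof (ssum_ge_term p X w i Hs ltac:(intros; left; auto) Hi). simpl in H; lra.
  -
    apply diag_diss; auto; split; auto.
Qed.

Definition gen p X (B : nat -> nat -> R) :=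
  (forall i j, X i = true -> X j = true -> i <> j -> 0 <= B i j) /\
  (forall i, X i = true -> ssum p X (B i) = 0).

Definition rem X i0 := fun i => X i && negb (Nat.eqb i i0).

Lemma ssum_remove p X f i0 : sub p X -> X i0 = true -> ssum p X f = ssum p (rem X i0) f + f i0.
Proof. intros Hs Hi. rewrite (ssum_split p X (fun i => negb (Nat.eqb i i0))). unfold rem.
  f_equal. rewrite (ssum_single p _ _ i0).
  - auto.
  - intros j Hj. apply andb_true_iff in Hj as [Hj _]; apply Hs; auto.
  - rewrite Hi, Nat.eqb_refl; auto.
  - intros j Hj Hne. apply andb_true_iff in Hj as [_ Hj]. rewrite negb_involutive in Hj.
    apply Nat.eqb_eq in Hj; lia. Qed.

Lemma sub_rem p X i0 : sub p X -> sub p (rem X i0).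
Proof. intros Hs i Hi. unfold rem in Hi. apply andb_true_iff in Hi as [Hi _]; auto. Qed.

Lemma rem_true X i0 i : rem X i0 i = true <-> X i = true /\ i <> i0.
Proof. unfold rem. rewrite andb_true_iff, negb_true_iff, Nat.eqb_neq. tauto. Qed.

Lemma diag_nonpos p X B i : sub p X -> X i = true ->
  (forall j, X j = true -> i <> j -> 0 <= B i j) -> ssum p X (B i) <= 0 -> B i i <= - ssum p (rem X i) (B i).
Proof. intros Hs Hi Hoff Hr. rewrite (ssum_remove p X (B i) i Hs Hi) in Hr. lra. Qed.

Lemma gen_stat : forall N p X B, (cardN p X < N)%nat -> sub p X -> gen p X B -> (exists i, X i = true) ->
  exists w, (forall i, X i = true -> 0 <= w i) /\ (exists i, X i = true /\ 0 < w i) /\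
    forall j, X j = true -> ssum p X (fun i => w i * B i j) = 0.
Proof.
  induction N; intros p X B HN Hs [Hoff Hrow] [i0 Hi0]; [lia|].
  assert (Hrow0 := Hrow i0 Hi0). rewrite (ssum_remove p X _ i0 Hs Hi0) in Hrow0.
  assert (Hnn : 0 <= ssum p (rem X i0) (B i0)).
  { apply ssum_nonneg. intros j Hj. apply rem_true in Hj as [Hj Hne]. apply Hoff; auto. }
  destruct (Req_dec (B i0 i0) 0) as [Hz|Hnz].
  - exists (fun i => if Nat.eqb i i0 then 1 else 0). split; [|split].
    + intros. destruct (Nat.eqb i i0); lra.
    + exists i0. rewrite Nat.eqb_refl; split; auto; lra.
    + intros j Hj. rewrite (ssum_single p X _ i0 Hs Hi0).
      * rewrite Nat.eqb_refl.
        assert (Hrz : ssum p (rem X i0) (B i0) = 0) by lra.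
        destruct (Nat.eqb j i0) eqn:E. { apply Nat.eqb_eq in E; subst. lra. }
        apply Nat.eqb_neq in E.
        pose proof (ssum_nonneg_zero p (rem X i0) (B i0) (sub_rem p X i0 Hs)
          ltac:(intros k Hk; apply rem_true in Hk as [Hk Hne]; apply Hoff; auto) Hrz j
          ltac:(apply rem_true; auto)). rewrite H; lra.
      * intros i _ Hne. apply Nat.eqb_neq in Hne. rewrite Hne. lra.
  - set (d := - B i0 i0). assert (Hd : 0 < d) by (unfold d; lra).
    set (X' := rem X i0).
    assert (HsX' : sub p X') by (apply sub_rem; auto).
    assert (HX'ne : exists i, X' i = true).
    { destruct (classic (exists i, X' i = true)) as [H|H]; auto.
      exfalso. rewrite (ssum_empty p X') in Hrow0; [lra|].
      intros i. destruct (X' i) eqn:E; auto. exfalso; apply H; eauto. }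
    set (B' := fun i j => B i j + B i i0 * B i0 j / d).
    assert (Hgen' : gen p X' B').
    { split.
      - intros i j Hi Hj Hne. apply rem_true in Hi as [Hi Hi']. apply rem_true in Hj as [Hj Hj'].
        unfold B'. assert (0 <= B i j) by (apply Hoff; auto). assert (0 <= B i i0) by (apply Hoff; auto).
        assert (0 <= B i0 j) by (apply Hoff; auto).
        assert (0 <= B i i0 * B i0 j / d) by (apply Rdiv_le_0_compat; [apply Rmult_le_pos|]; auto). lra.
      - intros i Hi. apply rem_true in Hi as [Hi Hi']. unfold B'.
        rewrite ssum_plus.
        replace (ssum p X' (fun j => B i i0 * B i0 j / d)) with (B i i0 / d * ssum p X' (B i0)).
        2:{ rewrite <- ssum_scal. apply ssum_ext; intros; field; lra. }
        pose proof (Hrow i Hi). rewrite (ssum_remove p X _ i0 Hs Hi0) in H. fold X' in H.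
        replace (ssum p X' (B i0)) with d by (unfold d, X'; lra).
        field_simplify; [lra|lra]. }
    assert (Hcard : (cardN p X' < N)%nat).
    { assert (cardN p X' < cardN p X)%nat; [|lia].
      apply cardN_lt. { intros i Hi; apply rem_true in Hi; tauto. }
      exists i0. split; [apply Hs; auto|]. split; auto. unfold X', rem. rewrite Nat.eqb_refl, andb_false_r; auto. }
    destruct (IHN p X' B' Hcard HsX' Hgen' HX'ne) as [w' [Hw'0 [[i1 [Hi1 Hw'1]] Hw'e]]].
    set (wp := ssum p X' (fun i => w' i * B i i0) / d).
    exists (fun i => if Nat.eqb i i0 then wp else w' i).
    assert (Hwp : 0 <= wp).
    { unfold wp. apply Rdiv_le_0_compat; [|lra]. apply ssum_nonneg. intros i Hi.
      apply rem_true in Hi as [Hi Hne]. apply Rmult_le_pos; [apply Hw'0; apply rem_true; auto|apply Hoff; auto]. }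
    split; [|split].
    + intros i Hi. destruct (Nat.eqb i i0) eqn:E; auto. apply Hw'0. apply rem_true. split; auto. apply Nat.eqb_neq; auto.
    + exists i1. apply rem_true in Hi1 as [Hi1 Hne]. split; auto. apply Nat.eqb_neq in Hne. rewrite Hne; auto.
    + intros j Hj. rewrite (ssum_remove p X _ i0 Hs Hi0). rewrite Nat.eqb_refl. fold X'.
      rewrite (ssum_ext p X' _ (fun i => w' i * B i j)).
      2:{ intros i Hi. apply rem_true in Hi as [_ Hne]. apply Nat.eqb_neq in Hne. rewrite Hne; auto. }
      destruct (Nat.eqb j i0) eqn:E.
      * apply Nat.eqb_eq in E; subst. unfold wp. fold d. replace (B i0 i0) with (- d) by (unfold d; lra). field; lra.
      * apply Nat.eqb_neq in E.
        pose proof (Hw'e j ltac:(apply rem_true; auto)). unfold B' in H.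
        rewrite <- H. unfold wp.
        replace (ssum p X' (fun i => w' i * (B i j + B i i0 * B i0 j / d))) with
          (ssum p X' (fun i => w' i * B i j) + ssum p X' (fun i => w' i * B i i0) * (B i0 j / d)).
        { field; lra. }
        rewrite <- ssum_scalr, <- ssum_plus. apply ssum_ext; intros. field; lra.
Qed.

Definition closed (X : nat -> bool) (B : nat -> nat -> R) (T : nat -> bool) :=
  forall i j, X i = true -> T j = true -> T i = false -> B i j = 0.
Definition irred (X : nat -> bool) (B : nat -> nat -> R) :=
  forall T, (forall i, T i = true -> X i = true) -> (exists j, T j = true) -> closed X B T ->
    forall i, X i = true -> T i = true.

Lemma irr_pos p X B : sub p X -> subgen p X B -> irred X B -> (exists i, X i = true) ->
  exists w, (forall i, X i = true -> 0 < w i) /\ forall j, X j = true -> ssum p X (fun i => w i * B i j) <= 0.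
Proof.
  intros Hs [Hoff Hrow] Hirr [i0 Hi0].
  set (c := cardR p X). assert (Hc : 0 < c) by (apply (cardR_pos p X i0); auto).
  set (r := fun i => ssum p X (B i)).
  set (Bt := fun i j => B i j - r i / c).
  assert (Hr : forall i, X i = true -> r i <= 0) by (intros; apply Hrow; auto).
  assert (Hg : gen p X Bt).
  { split.
    - intros i j Hi Hj Hne. unfold Bt. pose proof (Hoff i j Hi Hj Hne). pose proof (Hr i Hi).
      assert (r i / c <= 0) by (apply Rdiv_nonpos; lra). lra.
    - intros i Hi. unfold Bt. rewrite ssum_minus, ssum_const. fold (r i). fold c. field; lra. }
  destruct (gen_stat (S (cardN p X)) p X Bt ltac:(lia) Hs Hg ltac:(eauto)) as [w [Hw0 [[i1 [Hi1 Hw1]] Hwe]]].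
  set (T := fun i => X i && (if Req_EM_T (w i) 0 then true else false)).
  assert (HT : forall i, T i = true <-> X i = true /\ w i = 0).
  { intros i. unfold T. rewrite andb_true_iff. destruct (Req_EM_T (w i) 0); split; intros; try tauto; intuition discriminate. }
  assert (Hcl : closed X B T).
  { intros i j Hi Hj HTi. apply HT in Hj as [Hj Hwj].
    assert (Hwi : w i <> 0). { intros E. assert (T i = true) by (apply HT; auto). congruence. }
    assert (Hwi' : 0 < w i) by (pose proof (Hw0 i Hi); lra).
    assert (Hne : i <> j) by (intros ->; congruence).
    assert (Hnn : forall k, X k = true -> 0 <= w k * Bt k j).
    { intros k Hk. destruct (Nat.eq_dec k j). { subst. rewrite Hwj; lra. }
      apply Rmult_le_pos; auto. apply Hg; auto. }
    pose proof (ssum_nonneg_zero p X _ Hs Hnn (Hwe j Hj) i Hi).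
    assert (Bt i j = 0). { apply Rmult_integral in H as [H|H]; auto. lra. }
    unfold Bt in H0. pose proof (Hoff i j Hi Hj Hne). pose proof (Hr i Hi).
    assert (r i / c <= 0) by (apply Rdiv_nonpos; lra). lra. }
  assert (HTe : ~ exists j, T j = true).
  { intros HTn. pose proof (Hirr T ltac:(intros i Hi; apply HT in Hi; tauto) HTn Hcl i1 Hi1).
    apply HT in H as [_ H]. lra. }
  exists w. split.
  - intros i Hi. pose proof (Hw0 i Hi). destruct (Req_dec (w i) 0); [|lra].
    exfalso. apply HTe. exists i. apply HT; auto.
  - intros j Hj. pose proof (Hwe j Hj). unfold Bt in H.
    replace (ssum p X (fun i => w i * B i j)) with (ssum p X (fun i => w i * (B i j - r i / c)) + ssum p X (fun i => w i * r i) / c).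
    2:{ unfold Rdiv. rewrite <- ssum_scalr, <- ssum_plus. apply ssum_ext; intros; field; lra. }
    rewrite H. assert (ssum p X (fun i => w i * r i) <= 0).
    { rewrite <- (ssum_zero p X). apply ssum_le; intros i Hi. pose proof (Hw0 i Hi). pose proof (Hr i Hi). nra. }
    assert (ssum p X (fun i => w i * r i) / c <= 0) by (apply Rdiv_nonpos; lra). lra.
Qed.

Lemma min_closed : forall N p X B, (cardN p X < N)%nat -> sub p X -> (exists i, X i = true) ->
  exists S, (forall i, S i = true -> X i = true) /\ (exists i, S i = true) /\ closed X B S /\ irred S B.
Proof.
  induction N; intros p X B HN Hs Hne; [lia|].
  destruct (classic (irred X B)) as [Hi|Hi].
  - exists X. split; [auto|]. split; [auto|]. split; auto.
    intros i j H1 H2 H3. congruence.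
  - unfold irred in Hi.
    apply not_all_ex_not in Hi as [T Hi].
    apply imply_to_and in Hi as [HTX Hi]. apply imply_to_and in Hi as [HTne Hi].
    apply imply_to_and in Hi as [HTcl Hi].
    apply not_all_ex_not in Hi as [i0 Hi]. apply imply_to_and in Hi as [Hi0 HTi0].
    assert (HTi0' : T i0 = false) by (destruct (T i0); auto; congruence).
    assert (Hc : (cardN p T < cardN p X)%nat).
    { apply cardN_lt; auto. exists i0. split; auto. }
    destruct (IHN p T B ltac:(lia) ltac:(intros i Hi; apply Hs; auto) HTne) as [S [HST [HSne [HScl HSirr]]]].
    exists S. split; [auto|]. split; [auto|]. split; auto.
    intros i j HXi HSj HSi. destruct (T i) eqn:ETi.
    + apply (HScl i j ETi HSj HSi).
    + apply (HTcl i j HXi (HST j HSj) ETi).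
Qed.

Lemma cardN_rem p X i0 : X i0 = true -> (i0 < p)%nat -> cardN p X = S (cardN p (rem X i0)).
Proof. induction p; intros Hi Hp; [lia|]. simpl.
  destruct (Nat.eq_dec i0 p).
  - subst i0. unfold rem at 2. rewrite Nat.eqb_refl, andb_false_r, Hi.
    assert (cardN p (rem X p) = cardN p X).
    { clear IHp Hp. assert (forall q, (q <= p)%nat -> cardN q (rem X p) = cardN q X); [|apply H; lia].
      induction q; intros; simpl; auto. rewrite IHq by lia. unfold rem.
      assert (Nat.eqb q p = false) by (apply Nat.eqb_neq; lia). rewrite H0, andb_true_r. auto. }
    lia.
  - rewrite IHp by (auto; lia). assert (Nat.eqb p i0 = false) by (apply Nat.eqb_neq; lia).
    unfold rem. rewrite H, andb_true_r. lia. Qed.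

Lemma solve_lin : forall N p Rw C (M : nat -> nat -> R), (cardN p C < N)%nat -> sub p Rw -> sub p C ->
  cardN p Rw = cardN p C ->
  (forall z, (forall i, Rw i = true -> ssum p C (fun j => M i j * z j) = 0) -> forall j, C j = true -> z j = 0) ->
  forall f, exists z, forall i, Rw i = true -> ssum p C (fun j => M i j * z j) = f i.
Proof.
  induction N; intros p Rw C M HN HsR HsC Hcard Hinj f; [lia|].
  destruct (classic (exists j, C j = true)) as [[p0 Hp0]|HCe].
  2:{ assert (HRe : forall i, Rw i = false).
      { intros i. destruct (Rw i) eqn:E; auto. exfalso.
        assert (0 < cardN p Rw)%nat by (apply cardN_pos; exists i; split; auto).
        assert (cardN p C = 0)%nat.
        { assert (HCf : C = fun _ => false).
          { apply functional_extensionality; intros j. destruct (C j) eqn:E2; auto. exfalso; eauto. }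
          rewrite HCf. apply cardN_false. }
        lia. }
      exists (fun _ => 0). intros i Hi. rewrite HRe in Hi; discriminate. }
  assert (Hr : exists r, Rw r = true /\ M r p0 <> 0).
  { apply NNPP. intros Hn.
    assert (H0 : forall i, Rw i = true -> M i p0 = 0).
    { intros i Hi. apply NNPP. intros Hne. apply Hn. eauto. }
    pose proof (Hinj (fun j => if Nat.eqb j p0 then 1 else 0)).
    assert (1 = 0); [|lra].
    replace 1 with ((fun j => if Nat.eqb j p0 then 1 else 0) p0) by (simpl; rewrite Nat.eqb_refl; auto).
    apply H; auto. intros i Hi. rewrite (ssum_single p C _ p0 HsC Hp0).
    - rewrite Nat.eqb_refl, H0; auto; lra.
    - intros j _ Hne. apply Nat.eqb_neq in Hne. rewrite Hne; lra. }
  destruct Hr as [r [Hr HMr]].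
  set (R' := rem Rw r). set (C' := rem C p0).
  set (M' := fun i j => M i j - M i p0 * M r j / M r p0).
  assert (HsR' : sub p R') by (apply sub_rem; auto).
  assert (HsC' : sub p C') by (apply sub_rem; auto).
  assert (Hcard' : cardN p R' = cardN p C').
  { pose proof (cardN_rem p Rw r Hr (HsR r Hr)). pose proof (cardN_rem p C p0 Hp0 (HsC p0 Hp0)).
    unfold R', C'. lia. }
  assert (HN' : (cardN p C' < N)%nat).
  { pose proof (cardN_rem p C p0 Hp0 (HsC p0 Hp0)). unfold C'. lia. }
  set (ext := fun (z' : nat -> R) (v : R) => fun j => if Nat.eqb j p0 then v else z' j).
  assert (Hext : forall z' v i, ssum p C (fun j => M i j * ext z' v j) = ssum p C' (fun j => M i j * z' j) + M i p0 * v).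
  { intros z' v i. rewrite (ssum_remove p C _ p0 HsC Hp0). unfold ext. rewrite Nat.eqb_refl. fold C'.
    f_equal. apply ssum_ext. intros j Hj. apply rem_true in Hj as [_ Hj]. apply Nat.eqb_neq in Hj. rewrite Hj; auto. }
  assert (HM' : forall z' i, ssum p C' (fun j => M' i j * z' j) = ssum p C' (fun j => M i j * z' j) - M i p0 / M r p0 * ssum p C' (fun j => M r j * z' j)).
  { intros z' i. unfold M'. rewrite <- ssum_scal, <- ssum_minus. apply ssum_ext; intros; field; auto. }
  assert (Hinj' : forall z', (forall i, R' i = true -> ssum p C' (fun j => M' i j * z' j) = 0) -> forall j, C' j = true -> z' j = 0).
  { intros z' Hz j Hj.
    set (v := - ssum p C' (fun j => M r j * z' j) / M r p0).
    assert (Hz0 : forall i, Rw i = true -> ssum p C (fun j => M i j * ext z' v j) = 0).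
    { intros i Hi. rewrite Hext. destruct (Nat.eq_dec i r).
      - subst. unfold v. field; auto.
      - pose proof (Hz i ltac:(apply rem_true; auto)). rewrite HM' in H. unfold v.
        replace (ssum p C' (fun j => M i j * z' j)) with (M i p0 / M r p0 * ssum p C' (fun j => M r j * z' j)) by lra.
        field; auto. }
    pose proof (Hinj _ Hz0 j ltac:(apply rem_true in Hj; tauto)).
    apply rem_true in Hj as [_ Hj]. unfold ext in H. apply Nat.eqb_neq in Hj. rewrite Hj in H. auto. }
  set (f' := fun i => f i - M i p0 * f r / M r p0).
  destruct (IHN p R' C' M' HN' HsR' HsC' Hcard' Hinj' f') as [z' Hz'].
  exists (ext z' ((f r - ssum p C' (fun j => M r j * z' j)) / M r p0)).
  intros i Hi. rewrite Hext. destruct (Nat.eq_dec i r).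
  - subst. field; auto.
  - pose proof (Hz' i ltac:(apply rem_true; auto)). rewrite HM' in H. unfold f' in H.
    replace (ssum p C' (fun j => M i j * z' j)) with (f i - M i p0 * f r / M r p0 + M i p0 / M r p0 * ssum p C' (fun j => M r j * z' j)) by lra.
    field; auto.
Qed.

Lemma diag_ident ip p X B w y :
  2 * ssum p X (fun i => w i * ipf ip (y i) (Bv p X B y i)) =
  - (ssum p X (fun i => ssum p X (fun j => w i * B i j * ipf ip (fun k => y i k - y j k) (fun k => y i k - y j k)))
     + ssum p X (fun i => (- (w i * ssum p X (B i)) - ssum p X (fun i' => w i' * B i' i)) * ipf ip (y i) (y i))).
Proof.
  set (g := fun i j => ipf ip (y i) (y j)).
  set (nd := fun i j => ipf ip (fun k => y i k - y j k) (fun k => y i k - y j k)).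
  set (r := fun i => ssum p X (B i)).
  set (c := fun j => ssum p X (fun i => w i * B i j)).
  change (2 * ssum p X (fun i => w i * ipf ip (y i) (Bv p X B y i)) =
   - (ssum p X (fun i => ssum p X (fun j => w i * B i j * nd i j)) + ssum p X (fun i => (- (w i * r i) - c i) * g i i))).
  assert (E1 : forall i, ipf ip (y i) (Bv p X B y i) = ssum p X (fun j => B i j * g i j)).
  { intros i. unfold Bv. rewrite (ip_vlin_r ip p X (B i) y). auto. }
  assert (Hnd : forall i j, nd i j = g i i - 2 * g i j + g j j).
  { intros. unfold nd, g. rewrite ip_expand. auto. }
    assert (A1 : ssum p X (fun i => ssum p X (fun j => w i * B i j * nd i j)) =
       ssum p X (fun i => w i * r i * g i i) - 2 * ssum p X (fun i => w i * ssum p X (fun j => B i j * g i j))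
       + ssum p X (fun j => c j * g j j)).
    { assert (A2 : ssum p X (fun i => w i * r i * g i i) = ssum p X (fun i => ssum p X (fun j => w i * B i j * g i i))).
      { apply ssum_ext; intros i _. unfold r. rewrite <- ssum_scal, <- ssum_scalr. apply ssum_ext; intros; ring. }
      assert (A3 : ssum p X (fun j => c j * g j j) = ssum p X (fun i => ssum p X (fun j => w i * B i j * g j j))).
      { rewrite ssum_swap. apply ssum_ext; intros j _. unfold c. rewrite <- ssum_scalr. apply ssum_ext; intros; ring. }
      assert (A4 : 2 * ssum p X (fun i => w i * ssum p X (fun j => B i j * g i j)) = ssum p X (fun i => ssum p X (fun j => 2 * (w i * B i j * g i j)))).
      { rewrite <- ssum_scal. apply ssum_ext; intros. rewrite <- !ssum_scal. apply ssum_ext; intros; ring. }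
      rewrite A2, A3, A4, <- ssum_minus, <- ssum_plus. apply ssum_ext; intros i _.
      rewrite <- ssum_minus, <- ssum_plus. apply ssum_ext; intros j _. rewrite Hnd. ring. }
    rewrite A1.
    assert (A5 : ssum p X (fun i => w i * ipf ip (y i) (Bv p X B y i)) = ssum p X (fun i => w i * ssum p X (fun j => B i j * g i j))).
    { apply ssum_ext; intros; rewrite E1; auto. }
    rewrite A5.
    assert (A6 : ssum p X (fun i => (- (w i * r i) - c i) * g i i) = - ssum p X (fun i => w i * r i * g i i) - ssum p X (fun j => c j * g j j)).
    { rewrite <- ssum_opp, <- ssum_minus. apply ssum_ext; intros; ring. }
    rewrite A6. ring.
Qed.

Definition ipR : IP.
Proof. refine (mkIP (fun a b => a O * b O) _ _ _ _).
  - intros; ring. - intros; simpl; ring. - intros; simpl; ring. - intros; nra. Defined.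

Lemma inj_S p S B w : sub p S ->
  (forall i j, S i = true -> S j = true -> i <> j -> 0 <= B i j) ->
  (forall i, S i = true -> ssum p S (B i) <= 0) ->
  (forall i, S i = true -> 0 < w i) ->
  (forall j, S j = true -> ssum p S (fun i => w i * B i j) <= 0) ->
  irred S B -> (exists s0, S s0 = true /\ ssum p S (B s0) < 0) ->
  forall z, (forall i, S i = true -> ssum p S (fun j => B i j * z j) = 0) -> forall j, S j = true -> z j = 0.
Proof.
  intros Hs Hoff Hrow Hw Hc Hirr [s0 [Hs0 Hs0r]] z Hz.
  pose proof (diag_ident ipR p S B w (fun j _ => z j)) as HD. simpl in HD.
  assert (HL : ssum p S (fun i => w i * (z i * Bv p S B (fun j _ => z j) i O)) = 0).
  { rewrite <- (ssum_zero p S). apply ssum_ext; intros i Hi. unfold Bv. rewrite Hz; auto. ring. }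
  rewrite HL in HD.
  set (S1 := ssum p S (fun i => ssum p S (fun j => w i * B i j * ((z i - z j) * (z i - z j))))) in HD.
  set (S2 := ssum p S (fun i => (- (w i * ssum p S (B i)) - ssum p S (fun i' => w i' * B i' i)) * (z i * z i))) in HD.
  assert (H1t : forall i j, S i = true -> S j = true -> 0 <= w i * B i j * ((z i - z j) * (z i - z j))).
  { intros i j Hi Hj. destruct (Nat.eq_dec i j). { subst. replace (z j - z j) with 0 by ring. lra. }
    pose proof (Hoff i j Hi Hj n). pose proof (Hw i Hi). apply Rmult_le_pos; [apply Rmult_le_pos; lra|apply Rle_0_sqr]. }
  assert (H2t : forall i, S i = true -> 0 <= (- (w i * ssum p S (B i)) - ssum p S (fun i' => w i' * B i' i)) * (z i * z i)).
  { intros i Hi. pose proof (Hrow i Hi). pose proof (Hw i Hi). pose proof (Hc i Hi).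
    apply Rmult_le_pos; nra. }
  assert (HS1 : 0 <= S1) by (apply ssum_nonneg; intros; apply ssum_nonneg; intros; auto).
  assert (HS2 : 0 <= S2) by (apply ssum_nonneg; auto).
  assert (HS2z : S2 = 0) by lra. assert (HS1z : S1 = 0) by lra.
  assert (Hzs0 : z s0 = 0).
  { pose proof (ssum_nonneg_zero p S _ Hs H2t HS2z s0 Hs0). pose proof (Hw s0 Hs0). pose proof (Hc s0 Hs0).
    apply Rmult_integral in H as [H|H]; [|nra].
    assert (0 < - (w s0 * ssum p S (B s0))) by nra. lra. }
  set (T := fun j => S j && (if Req_EM_T (z j) 0 then true else false)).
  assert (HT : forall j, T j = true <-> S j = true /\ z j = 0).
  { intros j. unfold T. rewrite andb_true_iff. destruct (Req_EM_T (z j) 0); split; intros; try tauto; intuition discriminate. }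
  assert (Hcl : closed S B T).
  { intros i j Hi Hj HTi. apply HT in Hj as [Hj Hzj].
    assert (Hzi : z i <> 0). { intros E. assert (T i = true) by (apply HT; auto). congruence. }
    assert (Hne : i <> j) by (intros ->; congruence).
    pose proof (ssum_nonneg_zero p S _ Hs (fun i Hi => ssum_nonneg p S _ (fun j Hj => H1t i j Hi Hj)) HS1z i Hi).
    pose proof (ssum_nonneg_zero p S _ Hs (fun j Hj => H1t i j Hi Hj) H j Hj).
    cbv beta in H0. rewrite Hzj in H0. pose proof (Hw i Hi).
    replace (z i - 0) with (z i) in H0 by ring.
    apply Rmult_integral in H0 as [H0|H0]; [apply Rmult_integral in H0 as [H0|H0]; [lra|auto]|].
    exfalso. apply Rmult_integral in H0 as [H0|H0]; auto. }
  intros j Hj. assert (T j = true).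
  { apply (Hirr T); auto. - intros i Hi; apply HT in Hi; tauto. - exists s0. apply HT; auto. }
  apply HT in H; tauto.
Qed.

Lemma ip_sq_diff ip a b : ipf ip (fun k => a k - b k) (fun k => a k - b k) <= 2 * ipf ip a a + 2 * ipf ip b b.
Proof. rewrite ip_expand. pose proof (ip_cs2' ip a b). lra. Qed.

Definition cmpl (X S : nat -> bool) := fun i => X i && negb (S i).

Lemma ssum_XSA p X S f : (forall i, S i = true -> X i = true) ->
  ssum p X f = ssum p S f + ssum p (cmpl X S) f.
Proof. intros HSX. rewrite (ssum_split p X S). f_equal.
  replace (fun i => X i && S i) with S; auto. apply functional_extensionality; intros i.
  destruct (S i) eqn:E; [rewrite (HSX i E)|]; auto using andb_false_r. Qed.

Lemma Fq_ext ip p X P a a' b b' : (forall i, X i = true -> a i = a' i) -> (forall i, X i = true -> b i = b' i) ->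
  Fq ip p X P a b = Fq ip p X P a' b'.
Proof. intros Ha Hb. unfold Fq. apply ssum_ext; intros i Hi. apply ssum_ext; intros j Hj. rewrite Ha, Hb; auto. Qed.

Lemma nrm_ext ip p X a a' : (forall i, X i = true -> a i = a' i) -> nrm ip p X a = nrm ip p X a'.
Proof. intros Ha. unfold nrm. apply ssum_ext; intros i Hi. rewrite Ha; auto. Qed.

Lemma Fq_sub_r ip p X P a b c : Fq ip p X P a (fun i k => b i k - c i k) = Fq ip p X P a b - Fq ip p X P a c.
Proof. unfold Fq. rewrite <- ssum_minus. apply ssum_ext; intros. rewrite <- ssum_minus. apply ssum_ext; intros.
  rewrite ip_sub_r. ring. Qed.

Lemma nrm_mix ip p S A H y : sub p A ->
  nrm ip p S (fun s k => ssum p A (fun a => H s a * y a k)) <=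
  (cardR p A * ssum p S (fun s => ssum p A (fun a => H s a * H s a))) * nrm ip p A y.
Proof. intros HsA. unfold nrm. rewrite Rmult_assoc, (Rmult_comm (ssum _ _ _)), <- Rmult_assoc.
  rewrite <- ssum_scal. apply ssum_le; intros s Hs.
  pose proof (ip_wcs ip p A (fun _ => 1) (H s) y ltac:(intros; lra)) as Hw. cbv beta in Hw.
  replace (fun k => ssum p A (fun a => 1 * H s a * y a k)) with (fun k => ssum p A (fun a => H s a * y a k)) in Hw
    by (apply functional_extensionality; intros; apply ssum_ext; intros; ring).
  eapply Rle_trans; [apply Hw|]. fold (cardR p A).
  replace (cardR p A * ssum p A (fun i => ipf ip (y i) (y i)) * ssum p A (fun a => H s a * H s a)) with
    (cardR p A * (ssum p A (fun a => H s a * H s a) * nrm ip p A y)) by (unfold nrm; ring).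
  apply Rmult_le_compat_l; [apply cardR_nonneg|].
  rewrite <- ssum_scalr. apply ssum_le; intros a Ha. rewrite Rmult_1_l.
  apply Rmult_le_compat_l; [apply Rle_0_sqr|].
  apply (ssum_ge_term p A (fun i => ipf ip (y i) (y i))); auto. intros; apply ip_pos. Qed.

Lemma Fq_cross ip p S P a b eta : sub p S -> 0 < eta ->
  Rabs (Fq ip p S P a b) <= ssum p S (fun s => ssum p S (fun t => Rabs (P s t))) / 2 * (eta * nrm ip p S a + / eta * nrm ip p S b).
Proof. intros Hs Heta. unfold Fq.
  eapply Rle_trans; [apply ssum_abs|].
  set (na := nrm ip p S a). set (nb := nrm ip p S b).
  assert (Hna : forall s, S s = true -> ipf ip (a s) (a s) <= na).
  { intros s Hss. apply (ssum_ge_term p S (fun i => ipf ip (a i) (a i))); auto. intros; apply ip_pos. }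
  assert (Hnb : forall s, S s = true -> ipf ip (b s) (b s) <= nb).
  { intros s Hss. apply (ssum_ge_term p S (fun i => ipf ip (b i) (b i))); auto. intros; apply ip_pos. }
  replace (ssum p S (fun s => ssum p S (fun t => Rabs (P s t))) / 2 * (eta * na + / eta * nb)) with
    (ssum p S (fun s => ssum p S (fun t => Rabs (P s t) * ((eta * na + / eta * nb) / 2)))).
  2:{ transitivity (ssum p S (fun s => ssum p S (fun t => Rabs (P s t))) * ((eta * na + / eta * nb) / 2)); [|field].
      rewrite <- ssum_scalr. apply ssum_ext; intros. rewrite <- ssum_scalr. auto. lra. }
  apply ssum_le; intros s Hss.
  eapply Rle_trans; [apply ssum_abs|]. apply ssum_le; intros t Hts.
  rewrite Rabs_mult.
  pose proof (ip_cs_t ip (a s) (b t) eta Heta).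
  pose proof (Hna s Hss). pose proof (Hnb t Hts). pose proof (Rabs_pos (P s t)).
  assert (Rabs (ipf ip (a s) (b t)) <= (eta * na + / eta * nb) / 2).
  { assert (0 < / eta) by (apply Rinv_0_lt_compat; auto). nra. }
  apply Rmult_le_compat_l; auto. Qed.

Definition zz p A (H : nat -> nat -> R) (y : nat -> nat -> R) : nat -> nat -> R :=
  fun s k => y s k - ssum p A (fun a => H s a * y a k).

Lemma Fq_ident ip p X S PA PS H c a b : sub p X -> (forall i, S i = true -> X i = true) ->
  let A := cmpl X S in
  let E := fun s j => if S j then (if Nat.eqb s j then 1 else 0) else - H s j in
  Fq ip p X (fun i j => c * (if A i && A j then PA i j else 0) + ssum p S (fun s => ssum p S (fun t => E s i * PS s t * E t j))) a b
  = c * Fq ip p A PA a b + Fq ip p S PS (zz p A H a) (zz p A H b).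
Proof.
  intros HsX HSX A E.
  assert (HAX : forall i, A i = true -> X i = true) by (intros i Hi; unfold A, cmpl in Hi; apply andb_true_iff in Hi; tauto).
  assert (HsS : sub p S) by (intros i Hi; apply HsX; auto).
  assert (ZE : forall (y : nat -> nat -> R) s, S s = true -> (fun k => ssum p X (fun j => E s j * y j k)) = zz p A H y s).
  { intros y s Hs. apply functional_extensionality; intros k. unfold zz.
    rewrite (ssum_XSA p X S _ HSX). fold A. unfold Rminus. f_equal.
    - rewrite (ssum_single p S _ s HsS Hs). { unfold E; rewrite Hs, Nat.eqb_refl; ring. }
      intros j Hj Hne. unfold E. rewrite Hj. apply Nat.eqb_neq in Hne. rewrite Nat.eqb_sym, Hne. ring.
    - rewrite <- ssum_opp. apply ssum_ext; intros j Hj. unfold E.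
      unfold A, cmpl in Hj. apply andb_true_iff in Hj as [_ Hj]. apply negb_true_iff in Hj. rewrite Hj. ring. }
  unfold Fq.
  transitivity (ssum p X (fun i => ssum p X (fun j => c * ((if A i && A j then PA i j else 0) * ipf ip (a i) (b j))))
     + ssum p X (fun i => ssum p X (fun j => ssum p S (fun s => ssum p S (fun t => E s i * PS s t * E t j * ipf ip (a i) (b j)))))).
  { rewrite <- ssum_plus. apply ssum_ext; intros i Hi. rewrite <- ssum_plus. apply ssum_ext; intros j Hj.
    rewrite Rmult_plus_distr_r. f_equal; [ring|]. rewrite <- ssum_scalr. apply ssum_ext; intros. rewrite <- ssum_scalr; auto. }
  f_equal.
  - rewrite <- ssum_scal. rewrite (ssum_subset p A X _ HAX). apply ssum_ext; intros i Hi.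
    destruct (A i) eqn:EA.
    + rewrite <- ssum_scal, (ssum_subset p A X _ HAX). apply ssum_ext; intros j Hj.
      destruct (A j); simpl; ring.
    + rewrite (ssum_ext p X _ (fun _ => 0)); [apply ssum_zero|intros; simpl; ring].
  -
    transitivity (ssum p S (fun s => ssum p S (fun t => ssum p X (fun i => ssum p X (fun j => E s i * PS s t * E t j * ipf ip (a i) (b j)))))).
    + set (F := fun i j s t => E s i * PS s t * E t j * ipf ip (a i) (b j)).
      change (ssum p X (fun i => ssum p X (fun j => ssum p S (fun s => ssum p S (fun t => F i j s t)))) =
              ssum p S (fun s => ssum p S (fun t => ssum p X (fun i => ssum p X (fun j => F i j s t))))).
      transitivity (ssum p X (fun i => ssum p S (fun s => ssum p X (fun j => ssum p S (fun t => F i j s t))))).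
      { apply ssum_ext; intros i _. apply (ssum_swap p X S (fun j s => ssum p S (fun t => F i j s t))). }
      rewrite (ssum_swap p X S (fun i s => ssum p X (fun j => ssum p S (fun t => F i j s t)))).
      apply ssum_ext; intros s _.
      transitivity (ssum p X (fun i => ssum p S (fun t => ssum p X (fun j => F i j s t)))).
      { apply ssum_ext; intros i _. apply (ssum_swap p X S (fun j t => F i j s t)). }
      apply (ssum_swap p X S (fun i t => ssum p X (fun j => F i j s t))).
    + apply ssum_ext; intros s Hs. apply ssum_ext; intros t Ht.
      rewrite <- (ZE a s Hs), <- (ZE b t Ht).
      rewrite (ip_vlin ip p X (E s) a). rewrite <- ssum_scal. apply ssum_ext; intros i Hi.
      rewrite (ip_vlin_r ip p X (E t) b). rewrite <- !ssum_scal. apply ssum_ext; intros j Hj. ring.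
Qed.

Lemma combine p X S B PS lS LS eS H G :
  sub p X -> (forall i, S i = true -> X i = true) -> closed X B S ->
  Lyap p (cmpl X S) B ->
  0 < lS -> 0 < LS -> 0 < eS -> (forall i j, PS i j = PS j i) ->
  (forall ip y, lS * nrm ip p S y <= Fq ip p S PS y y /\ Fq ip p S PS y y <= LS * nrm ip p S y /\
      Fq ip p S PS y (Bv p S B y) <= - eS * nrm ip p S (Bv p S B y)) ->
  (forall s a, S s = true -> cmpl X S a = true -> ssum p S (fun t => B s t * H t a) + B s a = 0) ->
  0 <= G -> ((forall s a, H s a = 0) \/ (forall ip z, nrm ip p S z <= G * nrm ip p S (Bv p S B z))) ->
  Lyap p X B.
Proof.
  intros HsX HSX Hcl [PA [lA [LA [eA [HlA [HLA [HeA [HPA HA]]]]]]]] HlS HLS HeS HPS HS HH HG Hopt.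
  assert (HAX : forall i, (cmpl X S) i = true -> X i = true) by (intros i Hi; unfold cmpl in Hi; apply andb_true_iff in Hi; tauto).
  assert (HAS : forall i, (cmpl X S) i = true -> S i = false).
  { intros i Hi; unfold cmpl in Hi; apply andb_true_iff in Hi as [_ Hi]; apply negb_true_iff; auto. }
  assert (HsS : sub p S) by (intros i Hi; apply HsX; auto).
  assert (HsA : sub p (cmpl X S)) by (intros i Hi; apply HsX; auto).
  set (PiS := ssum p S (fun s => ssum p S (fun t => Rabs (PS s t)))).
  assert (HPiS : 0 <= PiS) by (apply ssum_nonneg; intros; apply ssum_nonneg; intros; apply Rabs_pos).
  set (KH := cardR p (cmpl X S) * ssum p S (fun s => ssum p (cmpl X S) (fun a => H s a * H s a))).
  assert (HKH : 0 <= KH).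
  { apply Rmult_le_pos; [apply cardR_nonneg|]. apply ssum_nonneg; intros; apply ssum_nonneg; intros; apply Rle_0_sqr. }
  set (eta := eS / (PiS * G + 1)).
  assert (Heta : 0 < eta) by (apply Rdiv_lt_0_compat; nra).
  assert (HetaG : eta * (PiS * G) <= eS).
  { unfold eta. apply (Rmult_le_reg_r (PiS * G + 1)); [nra|].
    replace (eS / (PiS * G + 1) * (PiS * G) * (PiS * G + 1)) with (eS * (PiS * G)) by (field; nra). nra. }
  set (c := 1 + PiS * KH / (2 * eta * eA)).
  assert (Hc1 : 1 <= c).
  { unfold c. assert (0 <= PiS * KH / (2 * eta * eA)) by (apply Rdiv_le_0_compat; nra). lra. }
  assert (HceA : c * eA = eA + PiS * KH / (2 * eta)) by (unfold c; field; lra).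
  set (m := Rmin (c * lA) lS).
  assert (Hm : 0 < m) by (apply Rmin_glb_lt; nra).
  assert (Hm1 : m <= c * lA) by apply Rmin_l. assert (Hm2 : m <= lS) by apply Rmin_r.
  exists (fun i j => c * (if (cmpl X S) i && (cmpl X S) j then PA i j else 0) + ssum p S (fun s => ssum p S (fun t => (fun s j => if S j then (if Nat.eqb s j then 1 else 0) else - H s j) s i * PS s t * (fun s j => if S j then (if Nat.eqb s j then 1 else 0) else - H s j) t j))), (m / (2 + 2 * KH)), (c * LA + 2 * LS * (KH + 1)), (Rmin eA (eS / 2)).
  split; [apply Rdiv_lt_0_compat; lra|]. split; [nra|]. split; [apply Rmin_glb_lt; lra|].
  split.
  { intros i j. f_equal.
    - rewrite andb_comm. destruct ((cmpl X S) j && (cmpl X S) i); [rewrite HPA|]; auto.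
    - cbv beta. rewrite ssum_swap. apply ssum_ext; intros; apply ssum_ext; intros. rewrite HPS. ring. }
  intros ip y.
  pose proof (Fq_ident ip p X S PA PS H c y y HsX HSX) as FI1. cbv zeta in FI1. rewrite FI1.
  set (z := zz p (cmpl X S) H y).
  set (Hy := fun s k => ssum p (cmpl X S) (fun a => H s a * y a k)).
  assert (Hsplit : forall v, nrm ip p X v = nrm ip p S v + nrm ip p (cmpl X S) v) by (intros; unfold nrm; apply ssum_XSA; auto).
  assert (Hmix : nrm ip p S Hy <= KH * nrm ip p (cmpl X S) y) by (apply nrm_mix; auto).
  assert (Hyz : nrm ip p S y <= 2 * nrm ip p S z + 2 * nrm ip p S Hy).
  { unfold nrm. rewrite <- !ssum_scal, <- ssum_plus. apply ssum_le; intros s Hs.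
    replace (y s) with (fun k => z s k + Hy s k) by (apply functional_extensionality; intros; unfold z, zz, Hy; ring).
    apply ip_sq_sum. }
  assert (Hzy : nrm ip p S z <= 2 * nrm ip p S y + 2 * nrm ip p S Hy).
  { unfold nrm. rewrite <- !ssum_scal, <- ssum_plus. apply ssum_le; intros s Hs. apply ip_sq_diff. }
  pose proof (nrm_nonneg ip p S y). pose proof (nrm_nonneg ip p (cmpl X S) y). pose proof (nrm_nonneg ip p S z).
  pose proof (nrm_nonneg ip p S Hy).
  destruct (HA ip y) as [HA1 [HA2 HA3]]. destruct (HS ip z) as [HS1 [HS2 HS3]].
  split; [|split].
  - rewrite Hsplit.
    assert (Hl2 : 2 * (m / (2 + 2 * KH)) <= m).
    { apply (Rmult_le_reg_r (2 + 2 * KH)); [lra|]. replace (2 * (m / (2 + 2 * KH)) * (2 + 2 * KH)) with (2 * m) by (field; lra). nra. }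
    assert (Hl3 : (2 * KH + 1) * (m / (2 + 2 * KH)) <= m).
    { apply (Rmult_le_reg_r (2 + 2 * KH)); [lra|]. replace ((2 * KH + 1) * (m / (2 + 2 * KH)) * (2 + 2 * KH)) with ((2 * KH + 1) * m) by (field; lra). nra. }
    assert (Hl0 : 0 <= m / (2 + 2 * KH)) by (apply Rdiv_le_0_compat; lra).
    assert (m * nrm ip p (cmpl X S) y <= c * Fq ip p (cmpl X S) PA y y) by nra.
    assert (m * nrm ip p S z <= Fq ip p S PS z z) by nra.
    assert (m / (2 + 2 * KH) * (nrm ip p S y + nrm ip p (cmpl X S) y) <= m / (2 + 2 * KH) * (2 * nrm ip p S z + (2 * KH + 1) * nrm ip p (cmpl X S) y)).
    { apply Rmult_le_compat_l; auto. nra. }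
    nra.
  - rewrite Hsplit.
    assert (c * Fq ip p (cmpl X S) PA y y <= c * (LA * nrm ip p (cmpl X S) y)) by (apply Rmult_le_compat_l; lra).
    assert (Fq ip p S PS z z <= LS * (2 * nrm ip p S y + 2 * (KH * nrm ip p (cmpl X S) y))).
    { eapply Rle_trans; [apply HS2|]. apply Rmult_le_compat_l; lra. }
    assert (0 <= c * LA * nrm ip p S y) by (apply Rmult_le_pos; [nra|auto]).
    assert (0 <= LS * KH * nrm ip p S y) by (apply Rmult_le_pos; [nra|auto]).
    assert (0 <= LS * nrm ip p (cmpl X S) y) by nra.
    nra.
  - set (v := Bv p X B y).
    pose proof (Fq_ident ip p X S PA PS H c y v HsX HSX) as FI2. cbv zeta in FI2. rewrite FI2. fold z.
    set (wv := fun s k => ssum p (cmpl X S) (fun a => H s a * Bv p (cmpl X S) B y a k)).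
    assert (Dv1 : forall a, (cmpl X S) a = true -> v a = Bv p (cmpl X S) B y a).
    { intros a Ha. apply functional_extensionality; intros k. unfold v, Bv.
      rewrite (ssum_XSA p X S _ HSX). rewrite (ssum_ext p S _ (fun _ => 0)); [rewrite ssum_zero; ring|].
      intros j Hj. rewrite (Hcl a j (HAX a Ha) Hj (HAS a Ha)). ring. }
    assert (Dv2 : forall s, S s = true -> v s = Bv p S B z s).
    { intros s Hs. apply functional_extensionality; intros k. unfold v, Bv, z, zz.
      rewrite (ssum_XSA p X S _ HSX).
      replace (ssum p S (fun j => B s j * (y j k - ssum p (cmpl X S) (fun a => H j a * y a k))))
        with (ssum p S (fun j => B s j * y j k) - ssum p (cmpl X S) (fun a => ssum p S (fun t => B s t * H t a) * y a k)).
      2:{ replace (ssum p (cmpl X S) (fun a => ssum p S (fun t => B s t * H t a) * y a k)) with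
            (ssum p S (fun t => ssum p (cmpl X S) (fun a => B s t * H t a * y a k))).
          2:{ rewrite ssum_swap. apply ssum_ext; intros. rewrite <- ssum_scalr. auto. }
          rewrite <- ssum_minus. apply ssum_ext; intros. rewrite Rmult_minus_distr_l. f_equal.
          rewrite <- ssum_scal. apply ssum_ext; intros; ring. }
      replace (ssum p (cmpl X S) (fun a => ssum p S (fun t => B s t * H t a) * y a k)) with (- ssum p (cmpl X S) (fun j => B s j * y j k)).
      { ring. }
      rewrite <- ssum_opp. apply ssum_ext; intros a Ha. replace (ssum p S (fun t => B s t * H t a)) with (- B s a) by (pose proof (HH s a Hs Ha); lra). ring. }
    assert (Dv3 : forall s, S s = true -> zz p (cmpl X S) H v s = (fun k => Bv p S B z s k - wv s k)).
    { intros s Hs. apply functional_extensionality; intros k. unfold zz. rewrite Dv2 by auto. unfold wv. f_equal.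
      apply ssum_ext; intros a Ha. rewrite Dv1; auto. }
    rewrite (Fq_ext ip p (cmpl X S) PA y y v (Bv p (cmpl X S) B y)) by (auto; intros; symmetry; apply Dv1; auto).
    rewrite (Fq_ext ip p S PS z z (zz p (cmpl X S) H v) (fun s k => Bv p S B z s k - wv s k)) by auto.
    rewrite Fq_sub_r.
    rewrite Hsplit, (nrm_ext ip p S v (Bv p S B z)) by auto. rewrite (nrm_ext ip p (cmpl X S) v (Bv p (cmpl X S) B y)) by auto.
    set (n1 := nrm ip p (cmpl X S) (Bv p (cmpl X S) B y)). set (n2 := nrm ip p S (Bv p S B z)).
    assert (Hn1 : 0 <= n1) by apply nrm_nonneg. assert (Hn2 : 0 <= n2) by apply nrm_nonneg.
    assert (Hcross : - Fq ip p S PS z wv <= eS / 2 * n2 + PiS * KH / (2 * eta) * n1).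
    { assert (0 <= PiS * KH / (2 * eta)) by (apply Rdiv_le_0_compat; nra).
      destruct Hopt as [Hz0|Hinv].
      - assert (Fq ip p S PS z wv = 0).
        { replace wv with (fun (s : nat) (k : nat) => 0).
          - unfold Fq. rewrite (ssum_ext p S _ (fun _ => 0)); [apply ssum_zero|]. intros i _.
            rewrite (ssum_ext p S _ (fun _ => 0)); [apply ssum_zero|]. intros j _.
            rewrite (ip_zero_r ip (z i)). ring.
          - apply functional_extensionality; intros s; apply functional_extensionality; intros k.
            unfold wv. rewrite (ssum_ext p (cmpl X S) _ (fun _ => 0)); [rewrite ssum_zero; auto|]. intros. rewrite Hz0; ring. }
        nra.
      - pose proof (Fq_cross ip p S PS z wv eta HsS Heta) as Hcr. fold PiS in Hcr.
        pose proof (Hinv ip z) as Hiz. fold n2 in Hiz.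
        assert (Hw : nrm ip p S wv <= KH * n1) by (apply nrm_mix; auto).
        pose proof (Rabs_Ropp (Fq ip p S PS z wv)). pose proof (Rle_abs (- Fq ip p S PS z wv)).
        assert (PiS / 2 * (eta * nrm ip p S z + / eta * nrm ip p S wv) <= eS / 2 * n2 + PiS * KH / (2 * eta) * n1).
        { assert (0 < / eta) by (apply Rinv_0_lt_compat; auto).
          assert (PiS / 2 * (eta * nrm ip p S z) <= eS / 2 * n2).
          { apply Rle_trans with (PiS / 2 * (eta * (G * n2))). { apply Rmult_le_compat_l; [lra|]. apply Rmult_le_compat_l; lra. }
            replace (PiS / 2 * (eta * (G * n2))) with ((eta * (PiS * G)) / 2 * n2) by field.
            apply Rmult_le_compat_r; lra. }
          assert (PiS / 2 * (/ eta * nrm ip p S wv) <= PiS * KH / (2 * eta) * n1).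
          { replace (PiS * KH / (2 * eta) * n1) with (PiS / 2 * (/ eta * (KH * n1))) by (field; lra).
            apply Rmult_le_compat_l; [lra|]. apply Rmult_le_compat_l; lra. }
          lra. }
        lra. }
    assert (HA3' : Fq ip p (cmpl X S) PA y (Bv p (cmpl X S) B y) <= - eA * n1) by auto.
    assert (Hcf : c * Fq ip p (cmpl X S) PA y (Bv p (cmpl X S) B y) <= - (c * eA) * n1) by nra.
    rewrite HceA in Hcf.
    assert (Hmin1 : Rmin eA (eS / 2) <= eA) by apply Rmin_l. assert (Hmin2 : Rmin eA (eS / 2) <= eS / 2) by apply Rmin_r.
    assert (Hmin0 : 0 < Rmin eA (eS / 2)) by (apply Rmin_glb_lt; lra).
    assert (Rmin eA (eS / 2) * n1 <= eA * n1) by (apply Rmult_le_compat_r; auto).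
    assert (Rmin eA (eS / 2) * n2 <= eS / 2 * n2) by (apply Rmult_le_compat_r; auto).
    assert (HS3b : Fq ip p S PS z (Bv p S B z) <= - eS * n2) by exact HS3. lra.
Qed.

Lemma subgen_sub p X Y B : sub p X -> subgen p X B -> (forall i, Y i = true -> X i = true) ->
  (forall i, Y i = true -> ssum p (cmpl X Y) (B i) >= 0 \/ True) ->
  (forall i j, Y i = true -> X j = true -> Y j = false -> 0 <= B i j) ->
  subgen p Y B.
Proof. intros Hs [Hoff Hrow] HYX _ Hnn. split.
  - intros i j Hi Hj Hne. apply Hoff; auto.
  - intros i Hi. pose proof (Hrow i (HYX i Hi)). rewrite (ssum_XSA p X Y _ HYX) in H.
    assert (0 <= ssum p (cmpl X Y) (B i)).
    { apply ssum_nonneg. intros j Hj. unfold cmpl in Hj. apply andb_true_iff in Hj as [Hj1 Hj2].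
      apply negb_true_iff in Hj2. apply Hnn; auto. }
    lra. Qed.

Lemma lyap_empty p X B : (forall i, X i = false) -> Lyap p X B.
Proof. intros He. exists (fun _ _ => 0), 1, 1, 1. repeat split; try lra.
  - unfold nrm, Fq. rewrite !ssum_empty; auto. lra.
  - unfold nrm, Fq. rewrite !ssum_empty; auto. lra.
  - unfold nrm, Fq. rewrite !ssum_empty; auto. lra. Qed.

Lemma lyap_all : forall N p X B, (cardN p X < N)%nat -> sub p X -> subgen p X B -> Lyap p X B.
Proof.
  induction N; intros p X B HN Hs Hsg; [lia|].
  destruct (classic (exists i, X i = true)) as [Hne|Hemp].
  2:{ apply lyap_empty. intros i. destruct (X i) eqn:E; auto. exfalso; eauto. }
  destruct (min_closed (S (cardN p X)) p X B ltac:(lia) Hs Hne) as [S [HSX [[s1 Hs1] [Hcl Hirr]]]].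
  assert (HsS : sub p S) by (intros i Hi; apply Hs; auto).
  assert (HsgS : subgen p S B).
  { apply (subgen_sub p X S B Hs Hsg HSX); auto. intros i j Hi Hj HSj. apply Hsg; auto.
    intros ->. congruence. }
  destruct (classic (exists a, X a = true /\ S a = false)) as [[a0 [Ha0 Ha0']]|HnoA].
  2:{ assert (HSeq : S = X).
      { apply functional_extensionality; intros i. destruct (X i) eqn:E.
        - destruct (S i) eqn:E2; auto. exfalso; eauto.
        - destruct (S i) eqn:E2; auto. rewrite (HSX i E2) in E; discriminate. }
      subst S. destruct (irr_pos p X B Hs Hsg Hirr Hne) as [w [Hw Hwc]].
      apply (lyap_diag p X B w); auto. }
  set (A := cmpl X S).
  assert (HAX : forall i, A i = true -> X i = true) by (intros i Hi; unfold A, cmpl in Hi; apply andb_true_iff in Hi; tauto).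
  assert (HsA : sub p A) by (intros i Hi; apply Hs; auto).
  assert (HsgA : subgen p A B).
  { apply (subgen_sub p X A B Hs Hsg HAX); auto. intros i j Hi Hj HAj.
    destruct (S j) eqn:ESj.
    - unfold A, cmpl in Hi. apply andb_true_iff in Hi as [Hi Hi2]. apply negb_true_iff in Hi2.
      rewrite (Hcl i j Hi ESj Hi2). lra.
    - exfalso. unfold A, cmpl in HAj. rewrite Hj, ESj in HAj. discriminate. }
  assert (HLA : Lyap p A B).
  { apply IHN; auto. assert (cardN p A < cardN p X)%nat; [|lia].
    apply cardN_lt; auto. exists s1. split; [apply HsS; auto|]. split; [apply HSX; auto|].
    unfold A, cmpl. rewrite Hs1, andb_false_r. auto. }
  destruct (irr_pos p S B HsS HsgS Hirr ltac:(eauto)) as [w [Hw Hwc]].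
  destruct (lyap_diag p S B w HsS HsgS Hw Hwc) as [PS [lS [LS [eS [HlS [HLS [HeS [HPS HLS']]]]]]]].
  destruct (classic (exists s a, S s = true /\ A a = true /\ B s a <> 0)) as [[s0 [a1 [Hs0 [Ha1 HBne]]]]|Hno].
  -
    assert (Hneg : exists s, S s = true /\ ssum p S (B s) < 0).
    { exists s0. split; auto. pose proof (proj2 Hsg s0 (HSX s0 Hs0)).
      rewrite (ssum_XSA p X S _ HSX) in H. fold A in H.
      assert (HBp : 0 < B s0 a1).
      { assert (0 <= B s0 a1). { apply (proj1 Hsg); auto. intros ->. unfold A, cmpl in Ha1. rewrite Hs0, andb_false_r in Ha1. discriminate. }
        lra. }
      assert (B s0 a1 <= ssum p A (B s0)).
      { apply (ssum_ge_term p A (B s0) a1 HsA); auto. intros j Hj. apply (proj1 Hsg); auto.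
        intros ->. unfold A, cmpl in Hj. rewrite Hs0, andb_false_r in Hj. discriminate. }
      lra. }
    assert (Hinj := inj_S p S B w HsS (proj1 HsgS) (proj2 HsgS) Hw Hwc Hirr Hneg).
    assert (Hsol : forall f, exists z, forall i, S i = true -> ssum p S (fun j => B i j * z j) = f i).
    { apply (solve_lin (Datatypes.S (cardN p S)) p S S B); auto. }
    pose (Hf := fun a => constructive_indefinite_description _ (Hsol (fun s => - B s a))).
    pose (H := fun t a => proj1_sig (Hf a) t).
    pose (Gf := fun u => constructive_indefinite_description _ (Hsol (fun s => if Nat.eqb s u then 1 else 0))).
    pose (Gm := fun t u => proj1_sig (Gf u) t).
    apply (combine p X S B PS lS LS eS H (cardR p S * ssum p S (fun s => ssum p S (fun u => Gm s u * Gm s u))));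
      auto.
    + intros s a Hs' Ha. unfold H. pose proof (proj2_sig (Hf a) s Hs'). simpl in H0. rewrite H0. ring.
    + apply Rmult_le_pos; [apply cardR_nonneg|]. apply ssum_nonneg; intros; apply ssum_nonneg; intros; apply Rle_0_sqr.
    + right. intros ip z.
      assert (HGz : forall s, S s = true -> z s = (fun k => ssum p S (fun u => Gm s u * Bv p S B z u k))).
      { intros s Hs'. apply functional_extensionality; intros k.
        assert (Hz0 := Hinj (fun t => ssum p S (fun u => Gm t u * Bv p S B z u k) - z t k)).
        assert (HBG : forall i u, S i = true -> S u = true -> ssum p S (fun t => B i t * Gm t u) = if Nat.eqb i u then 1 else 0).
        { intros i u Hi Hu. unfold Gm. apply (proj2_sig (Gf u) i Hi). }
        assert (0 = ssum p S (fun u => Gm s u * Bv p S B z u k) - z s k); [|lra].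
        symmetry. apply Hz0; auto. intros i Hi.
        transitivity (ssum p S (fun u => ssum p S (fun t => B i t * Gm t u) * Bv p S B z u k) - Bv p S B z i k).
        - 
          rewrite (ssum_ext p S (fun j => B i j * (ssum p S (fun u => Gm j u * Bv p S B z u k) - z j k))
             (fun j => B i j * ssum p S (fun u => Gm j u * Bv p S B z u k) - B i j * z j k)) by (intros; ring).
          rewrite ssum_minus. apply (f_equal2 Rminus); [|unfold Bv; reflexivity].
          transitivity (ssum p S (fun j => ssum p S (fun u => B i j * Gm j u * Bv p S B z u k))).
          { apply ssum_ext; intros. rewrite <- ssum_scal. apply ssum_ext; intros; ring. }
          rewrite ssum_swap. apply ssum_ext; intros. rewrite <- ssum_scalr. auto.
        - rewrite (ssum_ext p S _ (fun u => (if Nat.eqb i u then 1 else 0) * Bv p S B z u k)).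
          + rewrite ssum_delta; auto. ring.
          + intros u Hu. rewrite HBG; auto. }
      rewrite (nrm_ext ip p S z (fun s k => ssum p S (fun u => Gm s u * Bv p S B z u k))) by auto.
      apply nrm_mix; auto.
  -
    apply (combine p X S B PS lS LS eS (fun _ _ => 0) 0); auto; try lra.
    intros s a Hs' Ha. rewrite (ssum_ext p S _ (fun _ => 0)) by (intros; ring). rewrite ssum_zero.
    destruct (Req_dec (B s a) 0) as [E|E]; [rewrite E; ring|]. exfalso; apply Hno; eauto.
Qed.

Lemma exR_plus f g a b : ex_RInt f a b -> ex_RInt g a b -> ex_RInt (fun u => f u + g u) a b.
Proof. intros. apply (ex_RInt_plus f g a b); auto. Qed.
Lemma R_plus f g a b : ex_RInt f a b -> ex_RInt g a b -> RInt (fun u => f u + g u) a b = RInt f a b + RInt g a b.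
Proof. intros. apply (RInt_plus f g a b); auto. Qed.
Lemma exR_minus f g a b : ex_RInt f a b -> ex_RInt g a b -> ex_RInt (fun u => f u - g u) a b.
Proof. intros. apply (ex_RInt_minus f g a b); auto. Qed.
Lemma R_minus f g a b : ex_RInt f a b -> ex_RInt g a b -> RInt (fun u => f u - g u) a b = RInt f a b - RInt g a b.
Proof. intros. apply (RInt_minus f g a b); auto. Qed.
Lemma exR_cmul c f a b : ex_RInt f a b -> ex_RInt (fun u => c * f u) a b.
Proof. intros. apply (ex_RInt_scal f a b c); auto. Qed.
Lemma R_cmul c f a b : ex_RInt f a b -> RInt (fun u => c * f u) a b = c * RInt f a b.
Proof. intros. apply (RInt_scal f a b c); auto. Qed.
Lemma exR_mulc c f a b : ex_RInt f a b -> ex_RInt (fun u => f u * c) a b.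
Proof. intros. apply (ex_RInt_ext (fun u => c * f u)); [intros x _; change (c * f x = f x * c); ring|]. apply exR_cmul; auto. Qed.
Lemma R_mulc c f a b : ex_RInt f a b -> RInt (fun u => f u * c) a b = RInt f a b * c.
Proof. intros. rewrite (RInt_ext _ (fun u => c * f u)); [|intros x _; change (f x * c = c * f x); ring]. rewrite R_cmul; auto. apply Rmult_comm. Qed.
Lemma exR_zero a b : ex_RInt (fun _ => 0) a b.
Proof. apply ex_RInt_const. Qed.
Lemma R_zero a b : RInt (fun _ => 0) a b = 0.
Proof. rewrite RInt_const. apply Rmult_0_r. Qed.

Lemma exR_fsum m (h : nat -> R -> R) a b : (forall j, (j < m)%nat -> ex_RInt (h j) a b) ->
  ex_RInt (fun u => fsum m (fun j => h j u)) a b.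
Proof. induction m; intros H; simpl. - apply exR_zero.
  - apply exR_plus; [apply IHm; intros; apply H; lia|apply H; lia]. Qed.

Lemma R_fsum m (h : nat -> R -> R) a b : (forall j, (j < m)%nat -> ex_RInt (h j) a b) ->
  RInt (fun u => fsum m (fun j => h j u)) a b = fsum m (fun j => RInt (h j) a b).
Proof. induction m; intros H; simpl. - apply R_zero.
  - rewrite R_plus; [|apply exR_fsum; intros; apply H; lia|apply H; lia]. rewrite IHm; auto. Qed.

Definition BilF n p (P : nat -> nat -> R) (a b : nat -> nat -> R) :=
  fsum p (fun i => fsum p (fun j => P i j * fsum n (fun k => a i k * b j k))).

Lemma BilF_lin n p P a b : BilF n p P a b = fsum p (fun i => fsum n (fun k => a i k * fsum p (fun j => P i j * b j k))).
Proof. unfold BilF. apply fsum_ext; intros i _.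
  transitivity (fsum p (fun j => fsum n (fun k => a i k * (P i j * b j k)))).
  { apply fsum_ext; intros. rewrite <- fsum_scal. apply fsum_ext; intros; ring. }
  rewrite fsum_swap. apply fsum_ext; intros. rewrite <- fsum_scal. apply fsum_ext; intros; ring. Qed.

Lemma BilF_sym n p P a b : (forall i j, P i j = P j i) -> BilF n p P a b = BilF n p P b a.
Proof. intros HP. unfold BilF. rewrite fsum_swap. apply fsum_ext; intros; apply fsum_ext; intros.
  rewrite HP. f_equal. apply fsum_ext; intros; ring. Qed.

Lemma BilF_plus_l n p P a a' b : BilF n p P (fun i k => a i k + a' i k) b = BilF n p P a b + BilF n p P a' b.
Proof. unfold BilF. rewrite <- fsum_plus. apply fsum_ext; intros. rewrite <- fsum_plus. apply fsum_ext; intros.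
  rewrite <- Rmult_plus_distr_l, <- fsum_plus. f_equal. apply fsum_ext; intros; ring. Qed.

Lemma BilF_minus_l n p P a a' b : BilF n p P (fun i k => a i k - a' i k) b = BilF n p P a b - BilF n p P a' b.
Proof. unfold BilF. rewrite <- fsum_minus. apply fsum_ext; intros. rewrite <- fsum_minus. apply fsum_ext; intros.
  rewrite <- Rmult_minus_distr_l, <- fsum_minus. f_equal. apply fsum_ext; intros; ring. Qed.

Lemma BilF_plus_r n p P a b b' : BilF n p P a (fun i k => b i k + b' i k) = BilF n p P a b + BilF n p P a b'.
Proof. unfold BilF. rewrite <- fsum_plus. apply fsum_ext; intros. rewrite <- fsum_plus. apply fsum_ext; intros.
  rewrite <- Rmult_plus_distr_l, <- fsum_plus. f_equal. apply fsum_ext; intros; ring. Qed.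

Lemma BilF_scal_r n p P a c b : BilF n p P a (fun i k => c * b i k) = c * BilF n p P a b.
Proof. unfold BilF. rewrite <- fsum_scal. apply fsum_ext; intros. rewrite <- fsum_scal. apply fsum_ext; intros.
  rewrite (fsum_ext n _ (fun k => c * (a i k * b i0 k))) by (intros; ring). rewrite fsum_scal. ring. Qed.

Lemma BilF_diff n p P a b : (forall i j, P i j = P j i) ->
  BilF n p P a a - BilF n p P b b = BilF n p P (fun i k => a i k - b i k) (fun i k => a i k + b i k).
Proof. intros HP. rewrite BilF_minus_l, !BilF_plus_r. rewrite (BilF_sym n p P b a HP). ring. Qed.

Lemma BilF_bound n p P a b Ma Mb : 0 <= Ma -> 0 <= Mb ->
  (forall i k, (i < p)%nat -> (k < n)%nat -> Rabs (a i k) <= Ma) ->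
  (forall i k, (i < p)%nat -> (k < n)%nat -> Rabs (b i k) <= Mb) ->
  Rabs (BilF n p P a b) <= fsum p (fun i => fsum p (fun j => Rabs (P i j))) * INR n * Ma * Mb.
Proof. intros HMa HMb Ha Hb. unfold BilF.
  replace (fsum p (fun i => fsum p (fun j => Rabs (P i j))) * INR n * Ma * Mb) with
    (fsum p (fun i => fsum p (fun j => Rabs (P i j) * (INR n * (Ma * Mb))))).
  2:{ rewrite <- !fsum_scalr. apply fsum_ext; intros. rewrite <- fsum_scalr. rewrite <- fsum_scalr. rewrite <- fsum_scalr. apply fsum_ext; intros; ring. }
  apply fsum_abs_le; intros i Hi. apply fsum_abs_le; intros j Hj.
  rewrite Rabs_mult. apply Rmult_le_compat_l; [apply Rabs_pos|].
  rewrite <- fsum_const. apply fsum_abs_le; intros k Hk. rewrite Rabs_mult.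
  apply Rmult_le_compat; try apply Rabs_pos; auto. Qed.

Lemma telescope (V : R -> R) C T : 0 <= C -> 0 <= T ->
  (forall s t, 0 <= s -> s <= t -> t <= T -> V t - V s <= C * ((t - s) * (t - s))) -> V T <= V 0.
Proof. intros HC HT Hst.
  assert (HN : forall N : nat, V T - V 0 <= C * (T * T) / INR (S N)).
  { intros N. set (h := T / INR (S N)).
    assert (HSN : 0 < INR (S N)) by (apply lt_0_INR; lia).
    assert (Hh : 0 <= h) by (apply Rdiv_le_0_compat; lra).
    assert (Hk : forall k, (k <= S N)%nat -> V (INR k * h) - V 0 <= INR k * (C * (h * h))).
    { induction k; intros Hk. - simpl. replace (0 * h) with 0 by ring. lra.
      - assert (Hkh : INR (S k) * h <= T).
        { unfold h. replace (INR (S k) * (T / INR (S N))) with (T * (INR (S k) / INR (S N))) by (field; lra).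
          assert (INR (S k) / INR (S N) <= 1).
          { apply (Rmult_le_reg_r (INR (S N))); auto. replace (INR (S k) / INR (S N) * INR (S N)) with (INR (S k)) by (field; lra).
            rewrite Rmult_1_l. apply le_INR; auto. }
          assert (0 <= INR (S k) / INR (S N)) by (apply Rdiv_le_0_compat; [apply pos_INR|lra]). nra. }
        pose proof (IHk ltac:(lia)).
        pose proof (Hst (INR k * h) (INR (S k) * h) ltac:(apply Rmult_le_pos; [apply pos_INR|lra])
           ltac:(rewrite S_INR; nra) Hkh).
        replace (INR (S k) * h - INR k * h) with h in H0 by (rewrite S_INR; ring).
        replace (INR (S k) * (C * (h * h))) with (INR k * (C * (h * h)) + C * (h * h)) by (rewrite S_INR; ring). lra. }
    pose proof (Hk (S N) ltac:(lia)).
    replace (INR (S N) * h) with T in H by (unfold h; field; lra).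
    replace (INR (S N) * (C * (h * h))) with (C * (T * T) / INR (S N)) in H by (unfold h; field; lra). lra. }
  destruct (Rle_dec (V T - V 0) 0) as [H|H]; [lra|].
  exfalso. apply Rnot_le_lt in H.
  set (rr := C * (T * T) / (V T - V 0)).
  destruct (archimed rr) as [Harch _].
  assert (Hz : (0 <= up rr)%Z).
  { apply le_IZR. assert (0 <= rr) by (apply Rdiv_le_0_compat; nra). simpl. lra. }
  destruct (Z_of_nat_complete _ Hz) as [N HNz].
  pose proof (HN N). rewrite HNz in Harch. rewrite <- INR_IZR_INZ in Harch.
  assert (rr < INR (S N)) by (rewrite S_INR; lra). unfold rr in H1.
  assert (C * (T * T) < INR (S N) * (V T - V 0)).
  { apply (Rmult_lt_compat_r (V T - V 0)) in H1; auto. replace (C * (T * T) / (V T - V 0) * (V T - V 0)) with (C * (T * T)) in H1 by (field; lra). lra. }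
  assert (HSN : 0 < INR (S N)) by (apply lt_0_INR; lia).
  assert (V T - V 0 <= C * (T * T) / INR (S N)) by auto.
  apply (Rmult_le_compat_l (INR (S N))) in H3; [|lra].
  replace (INR (S N) * (C * (T * T) / INR (S N))) with (C * (T * T)) in H3 by (field; lra). lra.
Qed.

Definition SGm p (G : nat -> nat -> R) := fsum p (fun i => fsum p (fun j => Rabs (G i j))).

Lemma kron_bound n p G M y i k Mm My : 0 <= Mm -> 0 <= My -> (i < p)%nat -> (k < n)%nat ->
  (forall k l, (k < n)%nat -> (l < n)%nat -> Rabs (M k l) <= Mm) ->
  (forall j l, (j < p)%nat -> (l < n)%nat -> Rabs (y j l) <= My) ->
  Rabs (kron_apply n p G M y i k) <= SGm p G * (INR n * (Mm * My)).
Proof. intros HMm HMy Hi Hk HM Hy. unfold kron_apply.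
  apply Rle_trans with (fsum p (fun j => Rabs (G i j)) * (INR n * (Mm * My))).
  - rewrite <- fsum_scalr. apply fsum_abs_le; intros j Hj. rewrite Rabs_mult.
    apply Rmult_le_compat_l; [apply Rabs_pos|]. rewrite <- fsum_const. apply fsum_abs_le; intros l Hl.
    rewrite Rabs_mult. apply Rmult_le_compat; try apply Rabs_pos; auto.
  - apply Rmult_le_compat_r; [apply Rmult_le_pos; [apply pos_INR|nra]|].
    unfold SGm. apply (fsum_ge_term p (fun i => fsum p (fun j => Rabs (G i j)))); auto.
    intros; apply fsum_nonneg; intros; apply Rabs_pos. Qed.

Lemma kron_minus n p G M y1 y2 i k :
  kron_apply n p G M y1 i k - kron_apply n p G M y2 i k = kron_apply n p G M (fun j l => y1 j l - y2 j l) i k.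
Proof. unfold kron_apply. rewrite <- fsum_minus. apply fsum_ext; intros.
  rewrite <- Rmult_minus_distr_l, <- fsum_minus. f_equal. apply fsum_ext; intros; ring. Qed.

Lemma bound2 (P : nat -> nat -> R -> Prop) n m :
  (forall i j M M', M <= M' -> P i j M -> P i j M') ->
  (forall i j, (i < n)%nat -> (j < m)%nat -> exists M, P i j M) ->
  exists M, 0 <= M /\ forall i j, (i < n)%nat -> (j < m)%nat -> P i j M.
Proof. intros Hmono H.
  destruct (finite_bound n (fun i M => forall j, (j < m)%nat -> P i j M)) as [M [HM0 HM]].
  - intros i M M' HMM' Hi j Hj. eapply Hmono; eauto.
  - intros i Hi. destruct (finite_bound m (fun j M => P i j M)) as [M [_ HM]].
    + intros; eapply Hmono; eauto.
    + intros j Hj; apply H; auto.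
    + exists M; auto.
  - exists M; split; auto.
Qed.

Lemma ub_on n p (f : R -> nat -> nat -> R) T : 0 <= T ->
  (forall i k, (i < n)%nat -> (k < p)%nat -> ex_RInt (fun s => f s i k) 0 T) ->
  exists M, 0 <= M /\ forall i k u, (i < n)%nat -> (k < p)%nat -> 0 <= u <= T -> Rabs (f u i k) <= M.
Proof. intros HT Hint.
  destruct (bound2 (fun i k M => forall u, 0 <= u <= T -> Rabs (f u i k) <= M) n p) as [M [HM0 HM]].
  - intros i k M M' HMM' H u Hu. specialize (H u Hu). lra.
  - intros i k Hi Hk. destruct (ex_RInt_ub _ _ _ (Hint i k Hi Hk)) as [M HM].
    exists M. intros u Hu. apply HM. rewrite Rmin_left, Rmax_right by lra. auto.
  - exists M. split; auto.
Qed.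

Lemma BilF_ext_l n p P a a' b : (forall i k, (i < p)%nat -> (k < n)%nat -> a i k = a' i k) ->
  BilF n p P a b = BilF n p P a' b.
Proof. intros H. unfold BilF. apply fsum_ext; intros i Hi; apply fsum_ext; intros j Hj. f_equal.
  apply fsum_ext; intros k Hk. rewrite H; auto. Qed.
Lemma BilF_ext_r n p P a b b' : (forall i k, (i < p)%nat -> (k < n)%nat -> b i k = b' i k) ->
  BilF n p P a b = BilF n p P a b'.
Proof. intros H. unfold BilF. apply fsum_ext; intros i Hi; apply fsum_ext; intros j Hj. f_equal.
  apply fsum_ext; intros k Hk. rewrite H; auto. Qed.

Lemma mono n p G P Q x T :
  (forall i j, P i j = P j i) ->
  (forall u y, 0 <= u -> BilF n p P (fun i k => kron_apply n p G (Q u) y i k) y <= 0) ->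
  (forall k l T, (k < n)%nat -> (l < n)%nat -> 0 <= T -> ex_RInt (fun s => Q s k l) 0 T) ->
  is_solution n p G Q x -> 0 <= T ->
  BilF n p P (x T) (x T) <= BilF n p P (x 0) (x 0).
Proof.
  intros HP Hsign HQ Hsol HT.
  set (f := fun u i k => kron_apply n p G (Q u) (x u) i k).
  destruct (ub_on n n Q T HT (fun k l Hk Hl => HQ k l T Hk Hl HT)) as [Mq [HMq0 HMq]].
  destruct (ub_on p n f T HT (fun i k Hi Hk => proj1 (Hsol T HT i k Hi Hk))) as [Mf [HMf0 HMf]].
  destruct (bound2 (fun i k M => Rabs (x 0 i k) <= M) p n) as [M0 [HM00 HM0]].
  { intros; lra. } { intros i k _ _. exists (Rabs (x 0 i k)). lra. }
  set (Bx := M0 + T * Mf).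
  assert (HBx0 : 0 <= Bx) by (unfold Bx; nra).
  assert (Hint : forall s t i k, 0 <= s -> s <= t -> (i < p)%nat -> (k < n)%nat -> ex_RInt (fun u => f u i k) s t).
  { intros s t i k Hs Hst Hi Hk. apply (@ex_RInt_Chasles_2 R_CompleteNormedModule _ 0 s t); [lra|]. apply (Hsol t ltac:(lra) i k Hi Hk). }
  assert (Hdiff : forall s t i k, 0 <= s -> s <= t -> (i < p)%nat -> (k < n)%nat ->
     x t i k - x s i k = RInt (fun u => f u i k) s t).
  { intros s t i k Hs Hst Hi Hk.
    destruct (Hsol t ltac:(lra) i k Hi Hk) as [Ht1 Ht2]. destruct (Hsol s Hs i k Hi Hk) as [Hs1 Hs2].
    rewrite Ht2, Hs2. pose proof (@RInt_Chasles R_CompleteNormedModule (fun u => f u i k) 0 s t Hs1 (Hint s t i k Hs Hst Hi Hk)).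
    change (plus (RInt (fun u => f u i k) 0 s) (RInt (fun u => f u i k) s t) = RInt (fun u => f u i k) 0 t) in H.
    unfold f in *. simpl in H. change (RInt (fun u => kron_apply n p G (Q u) (x u) i k) 0 s + RInt (fun u => kron_apply n p G (Q u) (x u) i k) s t = RInt (fun u => kron_apply n p G (Q u) (x u) i k) 0 t) in H.
    lra. }
  assert (Hlip : forall s t i k, 0 <= s -> s <= t -> t <= T -> (i < p)%nat -> (k < n)%nat ->
     Rabs (x t i k - x s i k) <= (t - s) * Mf).
  { intros s t i k Hs Hst HtT Hi Hk. rewrite Hdiff by auto.
    apply abs_RInt_le_const; auto. intros u Hu. apply HMf; auto; lra. }
  assert (HxB : forall u i k, 0 <= u <= T -> (i < p)%nat -> (k < n)%nat -> Rabs (x u i k) <= Bx).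
  { intros u i k Hu Hi Hk. pose proof (Hlip 0 u i k ltac:(lra) ltac:(lra) ltac:(lra) Hi Hk).
    pose proof (HM0 i k Hi Hk). unfold Bx.
    replace (x u i k) with (x 0 i k + (x u i k - x 0 i k)) by ring.
    eapply Rle_trans; [apply Rabs_triang|]. assert (u * Mf <= T * Mf) by nra. lra. }
  set (SP := fsum p (fun i => fsum p (fun j => Rabs (P i j)))).
  assert (HSP : 0 <= SP) by (apply fsum_nonneg; intros; apply fsum_nonneg; intros; apply Rabs_pos).
  set (SG := SGm p G).
  assert (HSG : 0 <= SG) by (apply fsum_nonneg; intros; apply fsum_nonneg; intros; apply Rabs_pos).
  set (Mg := SG * (INR n * (Mq * Bx))).
  assert (HMg : 0 <= Mg) by (unfold Mg; pose proof (pos_INR n); apply Rmult_le_pos; auto; apply Rmult_le_pos; auto; nra).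
  pose proof (pos_INR n) as Hn0.
  set (C := SP * INR n * Mg * Mf + SP * INR n * (SG * (INR n * (Mq * Mf))) * (2 * Bx)).
  assert (HC : 0 <= C).
  { unfold C. assert (0 <= SG * (INR n * (Mq * Mf))) by (apply Rmult_le_pos; auto; apply Rmult_le_pos; auto; nra).
    assert (0 <= SP * INR n) by nra. assert (0 <= SP * INR n * Mg) by nra.
    assert (0 <= SP * INR n * (SG * (INR n * (Mq * Mf)))) by nra. nra. }
  apply (telescope (fun t => BilF n p P (x t) (x t)) C T HC HT).
  intros s t Hs Hst HtT.
  set (g := fun u i k => kron_apply n p G (Q u) (x s) i k).
  set (r := fun u i k => f u i k - g u i k).
  assert (HQst : forall k l, (k < n)%nat -> (l < n)%nat -> ex_RInt (fun u => Q u k l) s t).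
  { intros k l Hk Hl. apply (@ex_RInt_Chasles_2 R_CompleteNormedModule _ 0 s t); [lra|]. apply HQ; auto; lra. }
  assert (Hgi : forall i k, (i < p)%nat -> (k < n)%nat -> ex_RInt (fun u => g u i k) s t).
  { intros i k Hi Hk. unfold g, kron_apply. apply exR_fsum; intros j Hj. apply exR_cmul.
    apply exR_fsum; intros l Hl. apply exR_mulc. auto. }
  assert (Hri : forall i k, (i < p)%nat -> (k < n)%nat -> ex_RInt (fun u => r u i k) s t).
  { intros. unfold r. apply exR_minus; auto. }
  set (Gi := fun i k => RInt (fun u => g u i k) s t).
  set (Ri := fun i k => RInt (fun u => r u i k) s t).
  set (D := fun i k => x t i k - x s i k).
  assert (HD : forall i k, (i < p)%nat -> (k < n)%nat -> D i k = Gi i k + Ri i k).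
  { intros i k Hi Hk. unfold D, Gi, Ri, r. rewrite R_minus by auto. rewrite Hdiff by auto. symmetry; apply Rplus_minus. }
  rewrite (BilF_diff n p P (x t) (x s) HP).
  rewrite (BilF_ext_l n p P _ (fun i k => Gi i k + Ri i k)) by (intros; apply HD; auto).
  rewrite BilF_plus_l.
  rewrite (BilF_ext_r n p P Gi _ (fun i k => 2 * x s i k + D i k)) by (intros; unfold D; ring).
  rewrite BilF_plus_r, BilF_scal_r.
  assert (Hsg : BilF n p P Gi (x s) <= 0).
  { rewrite BilF_lin.
    assert (E : fsum p (fun i => fsum n (fun k => Gi i k * fsum p (fun j => P i j * x s j k))) =
                RInt (fun u => fsum p (fun i => fsum n (fun k => g u i k * fsum p (fun j => P i j * x s j k)))) s t).
    { rewrite R_fsum.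
      - apply fsum_ext; intros i Hi. rewrite R_fsum.
        + apply fsum_ext; intros k Hk. unfold Gi. rewrite R_mulc; auto.
        + intros k Hk. apply exR_mulc; auto.
      - intros i Hi. apply exR_fsum; intros k Hk. apply exR_mulc; auto. }
    rewrite E.
    rewrite <- (R_zero s t). apply RInt_le; auto.
    - apply exR_fsum; intros i Hi. apply exR_fsum; intros k Hk. apply exR_mulc; auto.
    - apply exR_zero.
    - intros u Hu. pose proof (Hsign u (x s) ltac:(lra)). rewrite BilF_lin in H. exact H. }
  assert (HGb : forall i k, (i < p)%nat -> (k < n)%nat -> Rabs (Gi i k) <= (t - s) * Mg).
  { intros i k Hi Hk. apply abs_RInt_le_const; auto. intros u Hu. unfold g, Mg.
    apply kron_bound; auto. - intros; apply HMq; auto; lra. - intros; apply HxB; auto; lra. }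
  assert (HDb : forall i k, (i < p)%nat -> (k < n)%nat -> Rabs (D i k) <= (t - s) * Mf).
  { intros; unfold D; apply Hlip; auto. }
  assert (HRb : forall i k, (i < p)%nat -> (k < n)%nat -> Rabs (Ri i k) <= (t - s) * (SG * (INR n * (Mq * ((t - s) * Mf))))).
  { intros i k Hi Hk. apply abs_RInt_le_const; auto. intros u Hu. unfold r, f, g. rewrite kron_minus.
    apply kron_bound; auto. - nra. - intros; apply HMq; auto; lra.
    - intros j l Hj Hl. eapply Rle_trans; [apply Hlip; auto; lra|]. apply Rmult_le_compat_r; lra. }
  assert (HWb : forall i k, (i < p)%nat -> (k < n)%nat -> Rabs (x t i k + x s i k) <= 2 * Bx).
  { intros. eapply Rle_trans; [apply Rabs_triang|]. pose proof (HxB t i k ltac:(lra) H H0). pose proof (HxB s i k ltac:(lra) H H0). lra. }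
  assert (Hts : 0 <= t - s) by lra.
  pose proof (BilF_bound n p P Gi D ((t - s) * Mg) ((t - s) * Mf) ltac:(nra) ltac:(nra) HGb HDb) as B1.
  assert (0 <= (t - s) * (SG * (INR n * (Mq * ((t - s) * Mf))))).
  { apply Rmult_le_pos; auto. apply Rmult_le_pos; auto. apply Rmult_le_pos; auto. apply Rmult_le_pos; auto. nra. }
  pose proof (BilF_bound n p P Ri (fun i k => x t i k + x s i k) _ (2 * Bx) H ltac:(lra) HRb HWb) as B2.
  fold SP in B1, B2.
  pose proof (Rle_abs (BilF n p P Gi D)). pose proof (Rle_abs (BilF n p P Ri (fun i k => x t i k + x s i k))).
  assert (E1 : SP * INR n * ((t - s) * Mg) * ((t - s) * Mf) = SP * INR n * Mg * Mf * ((t - s) * (t - s))) by ring.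
  assert (E2 : SP * INR n * ((t - s) * (SG * (INR n * (Mq * ((t - s) * Mf))))) * (2 * Bx) =
     SP * INR n * (SG * (INR n * (Mq * Mf))) * (2 * Bx) * ((t - s) * (t - s))) by ring.
  unfold C. lra.
Qed.

Definition ipQ (n : nat) (M : nat -> nat -> R) (Hsym : forall k l, (k < n)%nat -> (l < n)%nat -> M k l = M l k)
  (Hpos : forall v : nat -> R, 0 <= fsum n (fun k => fsum n (fun l => v k * M k l * v l))) : IP.
Proof. refine (mkIP (fun a b => fsum n (fun k => fsum n (fun l => a k * M k l * b l))) _ _ _ Hpos).
  - intros a b. rewrite fsum_swap. apply fsum_ext; intros; apply fsum_ext; intros. rewrite Hsym by auto. ring.
  - intros a b c. rewrite <- fsum_plus. apply fsum_ext; intros; rewrite <- fsum_plus; apply fsum_ext; intros; ring.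
  - intros r a c. rewrite <- fsum_scal. apply fsum_ext; intros; rewrite <- fsum_scal; apply fsum_ext; intros; ring.
Defined.

Definition ipE (n : nat) : IP.
Proof. refine (mkIP (fun a b => fsum n (fun k => a k * b k)) _ _ _ _).
  - intros a b. apply fsum_ext; intros; ring.
  - intros a b c. rewrite <- fsum_plus. apply fsum_ext; intros; ring.
  - intros r a c. rewrite <- fsum_scal. apply fsum_ext; intros; ring.
  - intros a. apply fsum_nonneg; intros; apply Rle_0_sqr.
Defined.

Lemma ssum_full p f : ssum p (fun i => Nat.ltb i p) f = fsum p f.
Proof. unfold ssum. apply fsum_ext; intros i Hi. apply Nat.ltb_lt in Hi. rewrite Hi; auto. Qed.

Lemma BilF_Fq n p P a b : BilF n p P a b = Fq (ipE n) p (fun i => Nat.ltb i p) P a b.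
Proof. unfold Fq. rewrite ssum_full. apply fsum_ext; intros. rewrite ssum_full. auto. Qed.

Lemma sign_lemma n p G P M Hsym Hpos y : (forall i j, P i j = P j i) ->
  BilF n p P (fun i k => kron_apply n p G M y i k) y =
  Fq (ipQ n M Hsym Hpos) p (fun i => Nat.ltb i p) P y (Bv p (fun i => Nat.ltb i p) G y).
Proof. intros HP.
  replace (Bv p (fun i => Nat.ltb i p) G y) with (fun j l => fsum p (fun m => G j m * y m l)).
  2:{ apply functional_extensionality; intros j; apply functional_extensionality; intros l. unfold Bv. rewrite ssum_full; auto. }
  unfold Fq. rewrite ssum_full. unfold BilF.
  rewrite fsum_swap. apply fsum_ext; intros i Hi. rewrite ssum_full. apply fsum_ext; intros j Hj.
  rewrite HP. f_equal. simpl. unfold kron_apply.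
  apply fsum_ext; intros k Hk.
  transitivity (y i k * fsum n (fun l => M k l * fsum p (fun m => G j m * y m l))).
  - rewrite Rmult_comm. f_equal.
    transitivity (fsum p (fun m => fsum n (fun l => M k l * (G j m * y m l)))).
    + apply fsum_ext; intros. rewrite <- fsum_scal. apply fsum_ext; intros; ring.
    + rewrite fsum_swap. apply fsum_ext; intros. rewrite <- fsum_scal. auto.
  - rewrite <- fsum_scal. apply fsum_ext; intros. ring.
Qed.

Lemma interconnection_subgen p G : interconnection p G -> subgen p (fun i => Nat.ltb i p) G.
Proof. intros [Hoff Hdiag]. split.
  - intros i j Hi Hj Hne. apply Nat.ltb_lt in Hi, Hj. apply Hoff; auto.
  - intros i Hi. apply Nat.ltb_lt in Hi. rewrite ssum_full.
    assert (fsum p (G i) = fsum p (fun j => if Nat.eq_dec j i then 0 else G i j) + G i i).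
    { rewrite (fsum_ext p (G i) (fun j => (if Nat.eq_dec j i then 0 else G i j) + (if Nat.eq_dec j i then G i i else 0))).
      2:{ intros j _. destruct (Nat.eq_dec j i); [subst; ring|ring]. }
      rewrite fsum_plus. f_equal. rewrite (fsum_single p _ i); auto.
      - destruct (Nat.eq_dec i i); [auto|lia].
      - intros j _ Hne. destruct (Nat.eq_dec j i); [lia|auto]. }
    rewrite H, (Hdiag i Hi). lra.
Qed.

Lemma vnorm_nrm n p y : vnorm n p y = sqrt (nrm (ipE n) p (fun i => Nat.ltb i p) y).
Proof. unfold vnorm, nrm. rewrite ssum_full. f_equal. apply fsum_ext; intros. simpl. apply fsum_ext; intros. ring. Qed.

Theorem theorem1 (n p : nat) (Gamma : nat -> nat -> R) :
  interconnection p Gamma ->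
  exists alpha : R, 0 < alpha /\
    forall Q : R -> nat -> nat -> R,
      (forall t, 0 <= t -> psd_sym n (Q t)) ->
      (forall k l T, (k < n)%nat -> (l < n)%nat -> 0 <= T ->
         ex_RInt (fun s => Q s k l) 0 T) ->
      forall x : R -> nat -> nat -> R,
        is_solution n p Gamma Q x ->
        forall t, 0 <= t -> vnorm n p (x t) <= alpha * vnorm n p (x 0).
Proof.
  intros Hic.
  set (X := fun i => Nat.ltb i p).
  assert (HsX : sub p X) by (intros i Hi; apply Nat.ltb_lt; auto).
  destruct (lyap_all (S (cardN p X)) p X Gamma ltac:(lia) HsX (interconnection_subgen p Gamma Hic))
    as [P [lam [Lam [eps [Hlam [HLam [Heps [HP HL]]]]]]]].
  exists (sqrt (Lam / lam)). split; [apply sqrt_lt_R0; apply Rdiv_lt_0_compat; auto|].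
  intros Q HQ HQi x Hsol t Ht.
  assert (Hsign : forall u y, 0 <= u -> BilF n p P (fun i k => kron_apply n p Gamma (Q u) y i k) y <= 0).
  { intros u y Hu. destruct (HQ u Hu) as [Hsym Hpos].
    rewrite (sign_lemma n p Gamma P (Q u) Hsym Hpos y HP).
    destruct (HL (ipQ n (Q u) Hsym Hpos) y) as [_ [_ H3]].
    pose proof (nrm_nonneg (ipQ n (Q u) Hsym Hpos) p X (Bv p X Gamma y)). fold X. nra. }
  pose proof (mono n p Gamma P Q x t HP Hsign HQi Hsol Ht) as Hm.
  rewrite !BilF_Fq in Hm. fold X in Hm.
  destruct (HL (ipE n) (x t)) as [H1 _]. destruct (HL (ipE n) (x 0)) as [_ [H2 _]].
  rewrite !vnorm_nrm. fold X.
  set (a := nrm (ipE n) p X (x t)) in *. set (b := nrm (ipE n) p X (x 0)) in *.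
  assert (Ha : 0 <= a) by apply nrm_nonneg. assert (Hb : 0 <= b) by apply nrm_nonneg.
  assert (a <= Lam / lam * b).
  { apply (Rmult_le_reg_l lam); auto. replace (lam * (Lam / lam * b)) with (Lam * b) by (field; lra). lra. }
  rewrite <- sqrt_mult_alt by (apply Rlt_le, Rdiv_lt_0_compat; auto).
  apply sqrt_le_1_alt; auto.
Qed.
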